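(* Let $m$ be a positive integer, let $f,g,h\in C^m(\mathbb{R})$ and let $K\subseteq\mathbb{R}$ be compact. If $\gamma=(f,g,h)$ satisfies the $A/V$ condition on $K$, then there is $\hat h\in C^m(\mathbb{R})$ with $\hat h|_K=h|_K$ and $\hat h'=2(f'g-fg')$ on $K$.
   Context: $C^m(\mathbb{R})$: $m$-times continuously differentiable real functions with bounded $m$th derivative. For $\gamma=(f,g,h)$ of class $C^m$ and $a\in\mathbb{R}$, $T_af(x)=\sum_{k=0}^m\frac{f^{(k)}(a)}{k!}(x-a)^k$ (similarly $T_ag$), and $A(\gamma;a,b)= h(b)-h(a)-2\int_a^b\big((T_af)'T_ag-(T_ag)'T_af\big) + 2f(a)(g(b)-T_ag(b)) - 2g(a)(f(b)-T_af(b))$, $V(\gamma;a,b)=(b-a)^{2m}+(b-a)^m\int_a^b(|(T_af)'|+|(T_ag)'|)$. $\gamma$ satisfies the $A/V$ condition on $E\subseteq\mathbb{R}$ if for every $\varepsilon>0$ there is $\delta>0$ with $|A(\gamma;a,b)/V(\gamma;a,b)|<\varepsilon$ for all $a,b\in E$ with $0<b-a<\delta$. *)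

(* Defs.v *)
From Stdlib Require Import Reals Factorial.
From Coquelicot Require Import Coquelicot.
Open Scope R_scope.

Definition Cm (m : nat) (f : R -> R) : Prop :=
  (forall k x, (k <= m)%nat -> ex_derive_n f k x) /\
  (forall x, continuous (Derive_n f m) x) /\
  (exists M, forall x, Rabs (Derive_n f m x) <= M).

Definition taylor (m : nat) (f : R -> R) (a : R) (x : R) : R :=
  sum_n (fun k => Derive_n f k a / INR (fact k) * (x - a) ^ k) m.

Definition Aq (m : nat) (f g h : R -> R) (a b : R) : R :=
  h b - h a
  - 2 * RInt (fun x => Derive (taylor m f a) x * taylor m g a x
                      - Derive (taylor m g a) x * taylor m f a x) a b
  + 2 * f a * (g b - taylor m g a b)
  - 2 * g a * (f b - taylor m f a b).

Definition Vq (m : nat) (f g : R -> R) (a b : R) : R :=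
  (b - a) ^ (2 * m)
  + (b - a) ^ m * RInt (fun x => Rabs (Derive (taylor m f a) x)
                                 + Rabs (Derive (taylor m g a) x)) a b.

Definition AV_condition (m : nat) (f g h : R -> R) (E : R -> Prop) : Prop :=
  forall eps, 0 < eps -> exists delta, 0 < delta /\
    forall a b, E a -> E b -> 0 < b - a < delta ->
      Rabs (Aq m f g h a b / Vq m f g a b) < eps.

(* Main.v *)
Require Import Defs.
From Stdlib Require Import Reals.
From Coquelicot Require Import Coquelicot.
Open Scope R_scope.
From Stdlib Require Import Lra Lia FunctionalExtensionality ClassicalEpsilon Factorial.

Definition Dk (k : nat) (f : R -> R) := forall j x, (j <= k)%nat -> ex_derive_n f j x.
Definition Ck (k : nat) (f : R -> R) := Dk k f /\ forall x, continuous (Derive_n f k) x.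

Lemma Derive_n_Sr f j x : Derive_n (Derive f) j x = Derive_n f (S j) x.
Proof.
  replace (S j) with (j+1)%nat by lia. rewrite <- (Derive_n_comp f j 1 x).
  reflexivity.
Qed.

Lemma Derive_n_Sr_fun f j : Derive_n (Derive f) j = Derive_n f (S j).
Proof. apply functional_extensionality; intro; apply Derive_n_Sr. Qed.

Lemma Dk_S k f : Dk (S k) f <-> (forall x, ex_derive f x) /\ Dk k (Derive f).
Proof.
  split.
  - intros H. split.
    + intros x. apply (H 1%nat x). lia.
    + intros j x Hj. destruct j as [|j]; [exact I|]. simpl.
      rewrite Derive_n_Sr_fun. apply (H (S (S j)) x). lia.
  - intros [H1 H2] j x Hj. destruct j as [|j]; [exact I|].
    destruct j as [|j]; [apply H1|].
    simpl. specialize (H2 (S j) x ltac:(lia)). simpl in H2.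
    rewrite Derive_n_Sr_fun in H2. exact H2.
Qed.

Lemma Ck_S k f : Ck (S k) f <-> (forall x, ex_derive f x) /\ Ck k (Derive f).
Proof.
  unfold Ck. rewrite Dk_S. rewrite Derive_n_Sr_fun. tauto.
Qed.

Lemma Ck_ext k f g : (forall x, f x = g x) -> Ck k f -> Ck k g.
Proof.
  intros H. replace g with f; auto. apply functional_extensionality; auto.
Qed.

Lemma exder_cont (f : R -> R) x : ex_derive f x -> continuous f x.
Proof. intros H. apply (ex_derive_continuous (K:=R_AbsRing) (V:=R_NormedModule)); auto. Qed.

Lemma Ck_cont k f : Ck k f -> forall x, continuous f x.
Proof.
  intros [H1 H2] x. destruct k as [|k].
  - apply (H2 x).
  - apply exder_cont. apply (H1 1%nat x). lia.
Qed.

Lemma Ck_weak k f : Ck (S k) f -> Ck k f.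
Proof.
  intros [H1 H2]. split.
  - intros j x Hj. apply H1. lia.
  - intros x. apply exder_cont. apply (H1 (S k) x). lia.
Qed.

Lemma Ck_le k k' f : (k' <= k)%nat -> Ck k f -> Ck k' f.
Proof.
  intros H. induction H; auto. intros Hc. apply IHle. apply Ck_weak; auto.
Qed.

Lemma Ck_const k c : Ck k (fun _ => c).
Proof.
  revert c. induction k; intros c.
  - split. intros j x Hj. apply ex_derive_n_const. intros x. apply continuous_const.
  - apply Ck_S. split. intros; apply ex_derive_const.
    apply Ck_ext with (fun _ => 0). intros x. rewrite Derive_const. auto. auto.
Qed.

Lemma Ck_id k : Ck k (fun x => x).
Proof.
  destruct k as [|k].
  - split. intros j x Hj; replace j with 0%nat by lia; exact I.
    intros x; apply continuous_id.
  - apply Ck_S. split. intros; apply ex_derive_id.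
    apply Ck_ext with (fun _ => 1). intros x. rewrite Derive_id. auto. apply Ck_const.
Qed.

Lemma Ck_plus k f g : Ck k f -> Ck k g -> Ck k (fun x => f x + g x).
Proof.
  revert f g. induction k; intros f g Hf Hg.
  - split. intros j x Hj; replace j with 0%nat by lia; exact I.
    intros x. apply (continuous_plus f g). apply Hf. apply Hg.
  - apply Ck_S in Hf as [Hf1 Hf2]. apply Ck_S in Hg as [Hg1 Hg2].
    apply Ck_S. split.
    + intros x. apply (ex_derive_plus f g); auto.
    + apply Ck_ext with (fun x => Derive f x + Derive g x).
      intros x. rewrite Derive_plus; auto. auto.
Qed.

Lemma Ck_scal k c f : Ck k f -> Ck k (fun x => c * f x).
Proof.
  revert f. induction k; intros f Hf.
  - split. intros j x Hj; replace j with 0%nat by lia; exact I.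
    intros x. apply (continuous_mult (fun _ => c) f). apply continuous_const. apply Hf.
  - apply Ck_S in Hf as [Hf1 Hf2].
    apply Ck_S. split.
    + intros x. apply (ex_derive_scal f); auto.
    + apply Ck_ext with (fun x => c * Derive f x).
      intros x. rewrite Derive_scal; auto. auto.
Qed.

Lemma Ck_opp k f : Ck k f -> Ck k (fun x => - f x).
Proof.
  intros H. apply Ck_ext with (fun x => -1 * f x). intros; ring. apply Ck_scal; auto.
Qed.

Lemma Ck_minus k f g : Ck k f -> Ck k g -> Ck k (fun x => f x - g x).
Proof.
  intros. apply Ck_plus; auto. apply Ck_opp; auto.
Qed.

Lemma Ck_mult k f g : Ck k f -> Ck k g -> Ck k (fun x => f x * g x).
Proof.
  revert f g. induction k; intros f g Hf Hg.
  - split. intros j x Hj; replace j with 0%nat by lia; exact I.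
    intros x. apply (continuous_mult f g). apply Hf. apply Hg.
  - pose proof (Ck_weak _ _ Hf) as Hf0. pose proof (Ck_weak _ _ Hg) as Hg0.
    apply Ck_S in Hf as [Hf1 Hf2]. apply Ck_S in Hg as [Hg1 Hg2].
    apply Ck_S. split.
    + intros x. apply (ex_derive_mult f g); auto.
    + apply Ck_ext with (fun x => Derive f x * g x + f x * Derive g x).
      intros x. rewrite Derive_mult; auto.
      apply Ck_plus; apply IHk; auto.
Qed.

Lemma Ck_pow k f n : Ck k f -> Ck k (fun x => f x ^ n).
Proof.
  intros H. induction n.
  - apply Ck_ext with (fun _ => 1). intros; simpl; auto. apply Ck_const.
  - apply Ck_ext with (fun x => f x * f x ^ n). intros; simpl; auto.
    apply Ck_mult; auto.
Qed.

Lemma Ck_inv k f : Ck k f -> (forall x, f x <> 0) -> Ck k (fun x => / f x).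
Proof.
  revert f. induction k; intros f Hf Hn.
  - split. intros j x Hj; replace j with 0%nat by lia; exact I.
    intros x. simpl. apply (continuous_comp f Rinv). apply Hf.
    apply continuity_pt_filterlim. apply continuity_pt_inv.
    apply continuity_pt_id. apply Hn.
  - pose proof (Ck_weak _ _ Hf) as Hf0.
    apply Ck_S in Hf as [Hf1 Hf2].
    apply Ck_S. split.
    + intros x. apply (ex_derive_inv f); auto.
    + apply Ck_ext with (fun x => - Derive f x * (/ f x * / f x)).
      intros x. rewrite Derive_inv; auto. field. auto.
      apply Ck_mult. apply Ck_opp; auto. apply Ck_mult; apply IHk; auto.
Qed.

Lemma Ck_RInt k F : Ck k F -> Ck (S k) (fun x => RInt F 0 x).
Proof.
  intros H. pose proof (Ck_cont _ _ H) as Hc.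
  assert (HD : forall x, is_derive (fun x => RInt F 0 x) x (F x)).
  { intros x. apply (is_derive_RInt F (fun x => RInt F 0 x) 0 x).
    apply filter_forall. intros y. apply (RInt_correct (V:=R_CompleteNormedModule)). apply (ex_RInt_continuous (V:=R_CompleteNormedModule)).
    intros; apply Hc. apply Hc. }
  apply Ck_S. split. intros x; eexists; apply HD.
  apply Ck_ext with F. intros x. symmetry; apply is_derive_unique, HD. auto.
Qed.

Definition smooth (f : R -> R) := forall k, Ck k f.

Lemma pow_lt_strict a b n : 0 <= a < b -> (1 <= n)%nat -> a ^ n < b ^ n.
Proof.
  intros [Ha Hb] Hn. induction n as [|n IH]; [lia|].
  destruct n as [|n]. simpl; lra.
  assert (IH' : a ^ S n < b ^ S n) by (apply IH; lia).
  simpl. simpl in IH'. pose proof (pow_le a n Ha). 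
  assert (0 <= a * a ^ n) by (apply Rmult_le_pos; auto).
  nra.
Qed.

Lemma den_nz t n : (1 <= n)%nat -> t ^ n + (1 - t) ^ n <> 0.
Proof.
  intros Hn.
  assert (Hneg : forall a b, 0 <= - a < b -> a ^ n + b ^ n > 0).
  { intros a b Hab. pose proof (pow_lt_strict (-a) b n Hab Hn).
    pose proof (pow_Rabs a n). rewrite RPow_abs in H0.
    pose proof (Rabs_pos (a^n)). 
    assert (Rabs a = -a) by (apply Rabs_left1; lra). rewrite <- RPow_abs in *. rewrite H2 in *.
    pose proof (Rle_abs (- a ^ n)). rewrite Rabs_Ropp in H3. rewrite <- RPow_abs in H3. rewrite H2 in H3. lra. }
  destruct (Rlt_dec t 0).
  - specialize (Hneg t (1 - t) ltac:(lra)). lra.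
  - destruct (Rle_dec t 1).
    + destruct (Rle_dec t (1/2)).
      * pose proof (pow_lt (1 - t) n ltac:(lra)). pose proof (pow_le t n ltac:(lra)). lra.
      * pose proof (pow_lt t n ltac:(lra)). pose proof (pow_le (1-t) n ltac:(lra)). lra.
    + specialize (Hneg (1 - t) t ltac:(lra)). lra.
Qed.

Lemma smooth_ext f g : (forall x, f x = g x) -> smooth f -> smooth g.
Proof. intros H Hf k. apply Ck_ext with f; auto. Qed.

Lemma smooth_Derive f : smooth f -> smooth (Derive f).
Proof. intros H k. exact (proj2 (proj1 (Ck_S k f) (H (S k)))). Qed.

Lemma smooth_ex_derive f : smooth f -> forall x, ex_derive f x.
Proof. intros H. exact (proj1 (proj1 (Ck_S 0 f) (H 1%nat))). Qed.

Lemma flat0 j : forall n f r c, (j < n)%nat -> smooth r ->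
  (forall t, f t = (t - c) ^ n * r t) -> Derive_n f j c = 0.
Proof.
  induction j as [|j IH]; intros n f r c Hj Hr Hf.
  - simpl. rewrite Hf. replace (c - c) with 0 by ring. rewrite pow_i by lia. ring.
  - rewrite <- Derive_n_Sr.
    destruct n as [|n]; [lia|].
    set (r2 := fun t => INR (S n) * r t + (t - c) * Derive r t).
    assert (HD : forall t, Derive f t = (t - c) ^ n * r2 t).
    { intros t. replace f with (fun t => (t - c) ^ S n * r t) by (apply functional_extensionality; intros; auto).
      rewrite Derive_mult.
      2: { apply ex_derive_pow. apply (ex_derive_minus (fun t => t) (fun _ => c)). apply ex_derive_id. apply ex_derive_const. }
      2: { apply smooth_ex_derive; auto. }
      rewrite Derive_pow. 2: { apply (ex_derive_minus (fun t => t) (fun _ => c)). apply ex_derive_id. apply ex_derive_const. }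
      rewrite Derive_minus. 2: apply ex_derive_id. 2: apply ex_derive_const.
      rewrite Derive_id, Derive_const. unfold r2. simpl pred. simpl. ring. }
    replace (Derive f) with (fun t => (t - c) ^ n * r2 t) by (apply functional_extensionality; intros; auto).
    apply (IH n _ r2 c); auto. lia.
    unfold r2. intros k. apply Ck_plus. apply Ck_scal. apply Hr.
    apply Ck_mult. apply Ck_minus. apply Ck_id. apply Ck_const. apply smooth_Derive; auto.
Qed.

Lemma flat1 j n f r c c0 : (1 <= j)%nat -> (j < n)%nat -> smooth r ->
  (forall t, f t = c0 + (t - c) ^ n * r t) -> Derive_n f j c = 0.
Proof.
  intros Hj1 Hj Hr Hf. destruct j as [|j]; [lia|].
  rewrite <- Derive_n_Sr.
  set (f0 := fun t => (t - c) ^ n * r t).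
  assert (Hs : smooth f0). { intros k. apply Ck_mult. apply Ck_pow. apply Ck_minus. apply Ck_id. apply Ck_const. apply Hr. }
  assert (HD : forall t, Derive f t = Derive f0 t).
  { intros t. replace f with (fun t => c0 + f0 t) by (apply functional_extensionality; intros; rewrite Hf; auto).
    rewrite Derive_plus. rewrite Derive_const. ring. apply ex_derive_const. apply smooth_ex_derive; auto. }
  replace (Derive f) with (Derive f0) by (apply functional_extensionality; intros; auto).
  rewrite Derive_n_Sr. apply (flat0 (S j) n f0 r c); auto.
Qed.

Lemma cont_bounded f a b : (forall x, continuous f x) -> exists B, 0 <= B /\ forall t, a <= t <= b -> Rabs (f t) <= B.
Proof.
  intros Hc. destruct (Rle_dec a b) as [Hab|Hab].
  - destruct (continuity_ab_maj (fun t => Rabs (f t)) a b Hab) as [M [HM _]].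
    { intros c _. apply continuity_pt_filterlim. apply (continuous_comp f Rabs). apply Hc. apply continuous_Rabs. }
    exists (Rabs (f M)). split. apply Rabs_pos. intros; apply HM; auto.
  - exists 0. split. lra. intros; lra.
Qed.

Lemma mvt f x y : x < y -> (forall t, x <= t <= y -> ex_derive f t) ->
  exists z, x < z < y /\ f y - f x = (y - x) * Derive f z.
Proof.
  intros Hxy Hd. destruct (Taylor_Lagrange f 0 x y Hxy) as [z [Hz Heq]].
  { intros t Ht k Hk. destruct k as [|k]. exact I. destruct k as [|k]. apply Hd; auto. lia. }
  exists z. split; auto. rewrite Heq. simpl sum_f_R0. simpl Derive_n. simpl Factorial.fact. simpl INR. change (Derive (fun x => f x) z) with (Derive f z). field.
Qed.

Lemma smooth_bounded_N Sf a b N : smooth Sf -> exists B, 0 <= B /\ forall j t, (j <= N)%nat -> a <= t <= b -> Rabs (Derive_n Sf j t) <= B.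
Proof.
  intros HS. induction N as [|N [B [HB0 HB]]].
  - destruct (cont_bounded (Derive_n Sf 0) a b) as [B [HB0 HB]]. apply (HS 0%nat).
    exists B. split; auto. intros j t Hj Ht. replace j with 0%nat by lia. auto.
  - destruct (cont_bounded (Derive_n Sf (S N)) a b) as [B' [HB0' HB']]. apply (HS (S N)).
    exists (Rmax B B'). split. apply Rle_trans with B; auto. apply Rmax_l.
    intros j t Hj Ht. destruct (Nat.eq_dec j (S N)). subst. apply Rle_trans with B'. auto. apply Rmax_r.
    apply Rle_trans with B. apply HB; auto. lia. apply Rmax_l.
Qed.

Definition Sm (n : nat) (t : R) := t ^ n * / (t ^ n + (1 - t) ^ n).

Definition SSprop (m : nat) (Sf : R -> R) (B : R) : Prop :=
  smooth Sf /\ 0 <= B /\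
  (forall j, (j <= m)%nat -> Derive_n Sf j 0 = 0) /\
  Sf 1 = 1 /\ (forall j, (1 <= j <= m)%nat -> Derive_n Sf j 1 = 0) /\
  (forall j t, (j <= m)%nat -> 0 <= t <= 1 -> Rabs (Derive_n Sf j t) <= B) /\
  (forall j t, (j <= m)%nat -> 0 <= t <= 1 -> Rabs (Derive_n Sf j t - Derive_n Sf j 0) <= B * t) /\
  (forall j t, (j <= m)%nat -> 0 <= t <= 1 -> Rabs (Derive_n Sf j t - Derive_n Sf j 1) <= B * (1 - t)) /\
  (forall j t, (S j <= m)%nat -> 0 <= t <= 1 -> Rabs (Derive_n Sf j t - Derive_n Sf j 0) <= B * t ^ 2) /\
  (forall j t, (S j <= m)%nat -> 0 <= t <= 1 -> Rabs (Derive_n Sf j t - Derive_n Sf j 1) <= B * (1 - t) ^ 2).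

Lemma smoothstep_exists m : (1 <= m)%nat -> exists Sf B, SSprop m Sf B.
Proof.
  unfold SSprop.
  intros Hm. set (n := S m).
  assert (Hn : (1 <= n)%nat) by (unfold n; lia).
  set (den := fun t => t ^ n + (1 - t) ^ n).
  assert (Hden : smooth den). { intros k. apply Ck_plus; apply Ck_pow. apply Ck_id. apply Ck_minus. apply Ck_const. apply Ck_id. }
  assert (Hdnz : forall t, den t <> 0) by (intros; apply den_nz; auto).
  assert (Hinv : smooth (fun t => / den t)) by (intros k; apply Ck_inv; auto).
  exists (Sm n).
  assert (HS : smooth (Sm n)). { intros k. apply Ck_mult. apply Ck_pow, Ck_id. apply Hinv. }
  destruct (smooth_bounded_N (Sm n) 0 1 (S m) HS) as [B [HB0 HB]].
  assert (H0 : forall j, (j <= m)%nat -> Derive_n (Sm n) j 0 = 0).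
  { intros j Hj. apply (flat0 j n (Sm n) (fun t => / den t) 0); auto. unfold n; lia.
    intros t. unfold Sm. replace (t - 0) with t by ring. reflexivity. }
  assert (H1 : forall j, (1 <= j <= m)%nat -> Derive_n (Sm n) j 1 = 0).
  { intros j Hj. apply (flat1 j n (Sm n) (fun t => - (-1) ^ n * / den t) 1 1); auto. lia. unfold n; lia.
    intros k. apply Ck_scal. apply Hinv.
    intros t. specialize (Hdnz t).
    assert (E: (1-t)^n = (-1)^n * (t-1)^n) by (rewrite <- Rpow_mult_distr; f_equal; ring).
    unfold Sm. unfold den in Hdnz. unfold den. rewrite E in *. field. auto. }
  assert (Hex : forall j t, ex_derive (Derive_n (Sm n) j) t).
  { intros j t. destruct (HS (S j)) as [Hd _]. apply (Hd (S j) t). lia. }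
  assert (b1 : forall j t, (j <= m)%nat -> 0 <= t <= 1 -> Rabs (Derive_n (Sm n) j t - Derive_n (Sm n) j 0) <= B * t).
  { intros j t Hj Ht. destruct (Req_dec t 0) as [->|Ht0].
    - unfold Rminus. rewrite Rplus_opp_r, Rabs_R0. lra.
    - destruct (mvt (Derive_n (Sm n) j) 0 t) as [z [Hz Heq]]. lra. intros; apply Hex.
      rewrite Heq. rewrite Rabs_mult. rewrite Rabs_right by lra.
      replace (t - 0) with t by ring. rewrite Rmult_comm. apply Rmult_le_compat_r. lra.
      apply (HB (S j) z). lia. lra. }
  assert (b2 : forall j t, (j <= m)%nat -> 0 <= t <= 1 -> Rabs (Derive_n (Sm n) j t - Derive_n (Sm n) j 1) <= B * (1 - t)).
  { intros j t Hj Ht. destruct (Req_dec t 1) as [->|Ht0].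
    - unfold Rminus. rewrite !Rplus_opp_r, Rabs_R0. lra.
    - destruct (mvt (Derive_n (Sm n) j) t 1) as [z [Hz Heq]]. lra. intros; apply Hex.
      rewrite <- Rabs_Ropp. replace (- (Derive_n (Sm n) j t - Derive_n (Sm n) j 1)) with (Derive_n (Sm n) j 1 - Derive_n (Sm n) j t) by ring.
      rewrite Heq. rewrite Rabs_mult. rewrite (Rabs_right (1 - t)) by lra.
      rewrite Rmult_comm. apply Rmult_le_compat_r. lra.
      apply (HB (S j) z). lia. lra. }
  exists B. split; [auto|]. split; [auto|]. split; [auto|]. split.
  { unfold Sm. rewrite pow1. replace (1 - 1) with 0 by ring. rewrite pow_i by lia. field. }
  split; [auto|]. split.
  { intros j t Hj Ht. apply HB; auto. }
  split; [auto|]. split; [auto|]. split.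
  - intros j t Hj Ht. destruct (Req_dec t 0) as [->|Ht0].
    + unfold Rminus. rewrite Rplus_opp_r, Rabs_R0. simpl. lra.
    + destruct (mvt (Derive_n (Sm n) j) 0 t) as [z [Hz Heq]]. lra. intros; apply Hex.
      rewrite Heq. rewrite Rabs_mult. rewrite Rabs_right by lra.
      replace (t - 0) with t by ring.
      specialize (b1 (S j) z Hj ltac:(lra)). rewrite (H0 (S j) Hj) in b1. rewrite Rminus_0_r in b1.
      change (Derive (Derive_n (Sm n) j) z) with (Derive_n (Sm n) (S j) z).
      apply Rle_trans with (t * (B * z)). apply Rmult_le_compat_l; lra.
      simpl. assert (B * z <= B * t) by (apply Rmult_le_compat_l; lra). nra.
  - intros j t Hj Ht. destruct (Req_dec t 1) as [->|Ht0].
    + unfold Rminus. rewrite !Rplus_opp_r, Rabs_R0. simpl. lra.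
    + destruct (mvt (Derive_n (Sm n) j) t 1) as [z [Hz Heq]]. lra. intros; apply Hex.
      rewrite <- Rabs_Ropp. replace (- (Derive_n (Sm n) j t - Derive_n (Sm n) j 1)) with (Derive_n (Sm n) j 1 - Derive_n (Sm n) j t) by ring.
      rewrite Heq. rewrite Rabs_mult. rewrite (Rabs_right (1 - t)) by lra.
      specialize (b2 (S j) z Hj ltac:(lra)). rewrite (H1 (S j) ltac:(lia)) in b2. rewrite Rminus_0_r in b2.
      change (Derive (Derive_n (Sm n) j) z) with (Derive_n (Sm n) (S j) z).
      apply Rle_trans with ((1 - t) * (B * (1 - z))). apply Rmult_le_compat_l; lra.
      simpl. assert (B * (1 - z) <= B * (1 - t)) by (apply Rmult_le_compat_l; lra). nra.
Qed.

Definition closedK (K : R -> Prop) := forall x, ~ K x -> exists e, 0 < e /\ forall y, Rabs (y - x) < e -> ~ K y.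

Definition gapL (K : R -> Prop) x := real (Lub_Rbar (fun k => K k /\ k <= x)).
Definition gapR (K : R -> Prop) x := real (Glb_Rbar (fun k => K k /\ x <= k)).

Lemma gapL_char K x p : K p -> p <= x -> (forall k, K k -> k <= x -> k <= p) -> gapL K x = p.
Proof.
  intros Hp Hpx Hk. unfold gapL. rewrite (is_lub_Rbar_unique _ (Finite p)). reflexivity.
  split.
  - intros k [Hk1 Hk2]. simpl. apply Hk; auto.
  - intros b Hb. apply Hb. split; auto.
Qed.

Lemma gapR_char K x q : K q -> x <= q -> (forall k, K k -> x <= k -> q <= k) -> gapR K x = q.
Proof.
  intros Hq Hqx Hk. unfold gapR. rewrite (is_glb_Rbar_unique _ (Finite q)). reflexivity.
  split.
  - intros k [Hk1 Hk2]. simpl. apply Hk; auto.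
  - intros b Hb. apply Hb. split; auto.
Qed.

Lemma gapL_spec K x : closedK K -> (exists k, K k /\ k <= x) ->
  K (gapL K x) /\ gapL K x <= x /\ forall k, K k -> k <= x -> k <= gapL K x.
Proof.
  intros Hcl Hne.
  destruct (completeness (fun k => K k /\ k <= x)) as [l [Hub Hlub]].
  { exists x. intros k [_ Hk]. auto. }
  { destruct Hne as [k Hk]. exists k. auto. }
  assert (Hlx : l <= x). { apply Hlub. intros k [_ Hk]. auto. }
  assert (HKl : K l).
  { destruct (Classical_Prop.classic (K l)) as [H|H]; auto.
    destruct (Hcl l H) as [e [He He2]].
    assert (l <= l - e). { apply Hlub. intros k [Hk1 Hk2].
      destruct (Rle_dec k (l - e)); auto. exfalso. apply (He2 k); auto.
      assert (k <= l) by (apply Hub; split; auto). rewrite Rabs_left1; lra. }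
    lra. }
  assert (Hall : forall k, K k -> k <= x -> k <= l) by (intros k Hk Hkx; apply Hub; split; auto).
  rewrite (gapL_char K x l); [split; [auto| split; [lra|auto]] | auto | lra | auto].
Qed.

Lemma gapR_spec K x : closedK K -> (exists k, K k /\ x <= k) ->
  K (gapR K x) /\ x <= gapR K x /\ forall k, K k -> x <= k -> gapR K x <= k.
Proof.
  intros Hcl Hne.
  destruct (completeness (fun k => K (- k) /\ - k >= x)) as [l [Hub Hlub]].
  { exists (- x). intros k [_ Hk]. lra. }
  { destruct Hne as [k Hk]. exists (- k). rewrite Ropp_involutive. split. apply Hk. lra. }
  assert (Hlx : - l >= x). { assert (l <= - x). apply Hlub. intros k [_ Hk]. lra. lra. }
  assert (HKl : K (- l)).
  { destruct (Classical_Prop.classic (K (- l))) as [H|H]; auto.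
    destruct (Hcl (- l) H) as [e [He He2]].
    assert (l <= l - e). { apply Hlub. intros k [Hk1 Hk2].
      destruct (Rle_dec k (l - e)); auto. exfalso. apply (He2 (- k)); auto.
      assert (k <= l) by (apply Hub; split; auto). rewrite Rabs_right; lra. }
    lra. }
  assert (Hall : forall k, K k -> x <= k -> - l <= k).
  { intros k Hk Hkx. assert (- k <= l). { apply Hub. rewrite Ropp_involutive. split; auto. lra. } lra. }
  rewrite (gapR_char K x (- l)); [split; [auto| split; [lra|auto]] | auto | lra | auto].
Qed.

Lemma gap_spec K al be x : closedK K -> K al -> K be -> (forall k, K k -> al <= k <= be) ->
  ~ K x -> al <= x <= be ->
  let p := gapL K x in let q := gapR K x in
  K p /\ K q /\ p < x < q /\ (forall y, p < y < q -> ~ K y) /\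
  (forall y, p < y < q -> gapL K y = p /\ gapR K y = q).
Proof.
  intros Hcl Ha Hb Hbd Hx Hxab p q.
  destruct (gapL_spec K x Hcl) as [Hp1 [Hp2 Hp3]]. { exists al; split; auto; lra. }
  destruct (gapR_spec K x Hcl) as [Hq1 [Hq2 Hq3]]. { exists be; split; auto; lra. }
  fold p in Hp1, Hp2, Hp3. fold q in Hq1, Hq2, Hq3.
  assert (p <> x). { intros E. apply Hx. rewrite <- E. auto. }
  assert (q <> x). { intros E. apply Hx. rewrite <- E. auto. }
  assert (Hgap : forall y, p < y < q -> ~ K y).
  { intros y Hy HKy. destruct (Rle_dec y x).
    - specialize (Hp3 y HKy r). lra.
    - specialize (Hq3 y HKy ltac:(lra)). lra. }
  split; auto. split; auto. split. lra. split; auto.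
  intros y Hy. split.
  - apply gapL_char; auto. lra. intros k Hk Hky.
    destruct (Rle_dec k p); auto. exfalso. apply (Hgap k); auto. split. lra.
    destruct (Rlt_dec k q); auto. lra.
  - apply gapR_char; auto. lra. intros k Hk Hky.
    destruct (Rle_dec q k); auto. exfalso. apply (Hgap k); auto. split; [|lra].
    destruct (Rlt_dec p k); auto. lra.
Qed.

Definition z0 (j : nat) (c : R) := match j with O => c | S _ => 0 end.

Definition psi (K : R -> Prop) (u : R -> R) (al be : R) (Sf : R -> R) (j : nat) (x : R) : R :=
  if excluded_middle_informative (K x) then z0 j (u x)
  else if Rlt_dec x al then z0 j (u al)
  else if Rlt_dec be x then z0 j (u be)
  else z0 j (u (gapL K x)) + (u (gapR K x) - u (gapL K x)) *
        Derive_n Sf j ((x - gapL K x) / (gapR K x - gapL K x)) / (gapR K x - gapL K x) ^ j.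

Definition WH (K : R -> Prop) (al be : R) :=
  closedK K /\ K al /\ K be /\ (forall k, K k -> al <= k <= be).


Lemma psi_K K u al be Sf j x : K x -> psi K u al be Sf j x = z0 j (u x).
Proof. intros H. unfold psi. destruct (excluded_middle_informative (K x)); tauto. Qed.

Lemma psi_lt K u al be Sf j x : WH K al be -> x < al -> psi K u al be Sf j x = z0 j (u al).
Proof.
  intros (Hc&Ha&Hb&Hbd) H. unfold psi. destruct (excluded_middle_informative (K x)) as [k|k].
  apply Hbd in k; lra. destruct (Rlt_dec x al); try lra; reflexivity.
Qed.

Lemma psi_gt K u al be Sf j x : WH K al be -> be < x -> psi K u al be Sf j x = z0 j (u be).
Proof.
  intros (Hc&Ha&Hb&Hbd) H. unfold psi. destruct (excluded_middle_informative (K x)) as [k|k].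
  apply Hbd in k; lra. destruct (Rlt_dec x al). apply Hbd in Ha; lra. destruct (Rlt_dec be x); try lra; reflexivity.
Qed.

Lemma psi_gap K u al be Sf j x : ~ K x -> al <= x <= be -> psi K u al be Sf j x =
  z0 j (u (gapL K x)) + (u (gapR K x) - u (gapL K x)) *
        Derive_n Sf j ((x - gapL K x) / (gapR K x - gapL K x)) / (gapR K x - gapL K x) ^ j.
Proof.
  intros H1 H2. unfold psi. destruct (excluded_middle_informative (K x)); try tauto.
  destruct (Rlt_dec x al); try lra. destruct (Rlt_dec be x); try lra; reflexivity.
Qed.

Lemma locR (x : R) (P : R -> Prop) e : 0 < e -> (forall y, Rabs (y - x) < e -> P y) -> locally x P.
Proof. intros He H. exists (mkposreal e He). intros y Hy. apply H. exact Hy. Qed.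

Lemma is_derive_const0 (c x : R) : is_derive (fun _ => c) x 0.
Proof. apply (is_derive_const (K:=R_AbsRing) (V:=R_NormedModule)). Qed.

Lemma psi_deriv_out K u al be Sf j x : WH K al be -> smooth Sf -> ~ K x ->
  is_derive (psi K u al be Sf j) x (psi K u al be Sf (S j) x).
Proof.
  intros HW HS Hx. pose proof HW as (Hc&Ha&Hb&Hbd).
  destruct (Rlt_dec x al) as [Hxa|Hxa].
  - rewrite psi_lt; auto. simpl z0.
    apply is_derive_ext_loc with (fun _ => z0 j (u al)). 2: apply is_derive_const0.
    apply (locR x _ (al - x)). lra. intros y Hy. rewrite psi_lt; auto.
    apply Rabs_def2 in Hy. lra.
  - destruct (Rlt_dec be x) as [Hxb|Hxb].
    + rewrite psi_gt; auto. simpl z0.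
      apply is_derive_ext_loc with (fun _ => z0 j (u be)). 2: apply is_derive_const0.
      apply (locR x _ (x - be)). lra. intros y Hy. rewrite psi_gt; auto.
      apply Rabs_def2 in Hy. lra.
    + destruct (gap_spec K al be x Hc Ha Hb Hbd Hx ltac:(lra)) as (Hp&Hq&Hpq&Hgap&Hgap2).
      set (p := gapL K x) in *. set (q := gapR K x) in *.
      rewrite psi_gap; auto; [|lra]. fold p q. simpl z0.
      apply is_derive_ext_loc with (fun y => z0 j (u p) + (u q - u p) * Derive_n Sf j ((y - p) / (q - p)) / (q - p) ^ j).
      { apply (locR x _ (Rmin (x - p) (q - x))). apply Rmin_pos; lra.
        intros y Hy. apply Rabs_def2 in Hy. destruct Hy as [Hy1 Hy2].
        pose proof (Rmin_l (x - p) (q - x)). pose proof (Rmin_r (x - p) (q - x)).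
        assert (Hy : p < y < q) by lra.
        destruct (Hgap2 y Hy) as [E1 E2].
        assert (al <= p) by (apply Hbd in Hp; lra). assert (q <= be) by (apply Hbd in Hq; lra).
        rewrite psi_gap; [rewrite E1, E2; reflexivity | apply Hgap; auto | lra]. }
      assert (Hex : forall t, ex_derive (Derive_n Sf j) t).
      { intros t. destruct (HS (S j)) as [Hd _]. apply (Hd (S j) t). lia. }
      auto_derive. apply Hex.
      change (Derive (fun x : R => Derive_n Sf j x) ((x + - p) * / (q - p))) with (Derive_n Sf (S j) ((x - p) / (q - p))).
      simpl pow. field. split. apply pow_nonzero. lra. lra.
Qed.

Lemma pow_le1 d n : 0 <= d <= 1 -> d ^ n <= 1.
Proof. intros H. rewrite <- (pow1 n). apply pow_incr. lra. Qed.

Lemma pow_le_self d m : 0 <= d <= 1 -> (1 <= m)%nat -> d ^ m <= d.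
Proof.
  intros Hd Hm. destruct m as [|m]; [lia|]. simpl.
  pose proof (pow_le1 d m Hd). pose proof (pow_le d m ltac:(lra)). nra.
Qed.

Lemma abs_div_pow a b L j : 0 < L -> Rabs (a * b / L ^ j) = Rabs a * Rabs b / L ^ j.
Proof.
  intros HL. unfold Rdiv. rewrite !Rabs_mult. rewrite Rabs_inv. rewrite <- RPow_abs.
  rewrite (Rabs_right L) by lra. reflexivity.
Qed.

Lemma T2_small L d D s e1 Bs j m : 0 < L <= 1 -> 0 <= d <= L -> 0 <= e1 -> 0 <= Bs ->
  Rabs D <= e1 * L ^ m -> Rabs s <= Bs * (d / L) -> (S j <= m)%nat ->
  Rabs (D * s / L ^ j) <= e1 * Bs * d.
Proof.
  intros HL Hd He Hb HD Hs Hj. rewrite abs_div_pow by lra.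
  destruct (Nat.le_exists_sub (S j) m Hj) as [r [Hr _]]. subst m.
  assert (HLj : 0 < L ^ j) by (apply pow_lt; lra).
  assert (Hr1 : L ^ r <= 1) by (apply pow_le1; lra).
  assert (Hr0 : 0 <= L ^ r) by (apply pow_le; lra).
  rewrite pow_add in HD. simpl in HD.
  apply Rle_trans with (e1 * (L ^ r * (L * L ^ j)) * (Bs * (d / L)) / L ^ j).
  { unfold Rdiv. apply Rmult_le_compat_r. left; apply Rinv_0_lt_compat; auto.
    apply Rmult_le_compat; auto using Rabs_pos. }
  replace (e1 * (L ^ r * (L * L ^ j)) * (Bs * (d / L)) / L ^ j) with (e1 * Bs * d * L ^ r) by (field; lra).
  assert (0 <= e1 * Bs * d) by (apply Rmult_le_pos; [apply Rmult_le_pos|]; lra).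
  nra.
Qed.

Lemma T2_large L d D s Bu Bs d1 j : 0 < d1 <= L -> 0 <= d -> 0 <= Bs ->
  Rabs D <= 2 * Bu -> Rabs s <= Bs * (d / L) ^ 2 ->
  Rabs (D * s / L ^ j) <= 2 * Bu * Bs / d1 ^ (j + 2) * d ^ 2.
Proof.
  intros Hd1 Hd Hb HD Hs. rewrite abs_div_pow by lra.
  assert (HLj : 0 < L ^ j) by (apply pow_lt; lra).
  assert (Hd1j : 0 < d1 ^ (j + 2)) by (apply pow_lt; lra).
  assert (Hle : d1 ^ (j + 2) <= L ^ (j + 2)) by (apply pow_incr; lra).
  assert (HBu : 0 <= 2 * Bu) by (pose proof (Rabs_pos D); lra).
  apply Rle_trans with (2 * Bu * (Bs * (d / L) ^ 2) / L ^ j).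
  { unfold Rdiv. apply Rmult_le_compat_r. left; apply Rinv_0_lt_compat; auto.
    apply Rmult_le_compat; auto using Rabs_pos. }
  replace (2 * Bu * (Bs * (d / L) ^ 2) / L ^ j) with (2 * Bu * Bs * d ^ 2 / L ^ (j + 2)).
  2: { rewrite pow_add. simpl. field. split; lra. }
  unfold Rdiv. replace (2 * Bu * Bs * / d1 ^ (j + 2) * d ^ 2) with (2 * Bu * Bs * d ^ 2 * / d1 ^ (j + 2)) by ring.
  apply Rmult_le_compat_l. apply Rmult_le_pos. apply Rmult_le_pos; lra. apply pow_le; lra.
  apply Rinv_le_contravar; auto.
Qed.

Lemma T3_small L D s e1 Bs m : 0 < L -> 0 <= e1 -> Rabs D <= e1 * L ^ m -> Rabs s <= Bs ->
  Rabs (D * s / L ^ m) <= e1 * Bs.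
Proof.
  intros HL He HD Hs. rewrite abs_div_pow by lra.
  assert (HLm : 0 < L ^ m) by (apply pow_lt; lra).
  apply Rle_trans with (e1 * L ^ m * Bs / L ^ m).
  { unfold Rdiv. apply Rmult_le_compat_r. left; apply Rinv_0_lt_compat; auto.
    apply Rmult_le_compat; auto using Rabs_pos. }
  right. field. lra.
Qed.

Lemma T3_large L d D s Bu Bs d1 m : 0 < d1 <= L -> 0 <= d -> 0 <= Bs ->
  Rabs D <= 2 * Bu -> Rabs s <= Bs * (d / L) ->
  Rabs (D * s / L ^ m) <= 2 * Bu * Bs / d1 ^ (m + 1) * d.
Proof.
  intros Hd1 Hd Hb HD Hs. rewrite abs_div_pow by lra.
  assert (HLj : 0 < L ^ m) by (apply pow_lt; lra).
  assert (Hd1j : 0 < d1 ^ (m + 1)) by (apply pow_lt; lra).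
  assert (Hle : d1 ^ (m + 1) <= L ^ (m + 1)) by (apply pow_incr; lra).
  assert (HBu : 0 <= 2 * Bu) by (pose proof (Rabs_pos D); lra).
  apply Rle_trans with (2 * Bu * (Bs * (d / L)) / L ^ m).
  { unfold Rdiv. apply Rmult_le_compat_r. left; apply Rinv_0_lt_compat; auto.
    apply Rmult_le_compat; auto using Rabs_pos. }
  replace (2 * Bu * (Bs * (d / L)) / L ^ m) with (2 * Bu * Bs * d / L ^ (m + 1)).
  2: { rewrite pow_add. simpl. field. split; lra. }
  unfold Rdiv. replace (2 * Bu * Bs * / d1 ^ (m + 1) * d) with (2 * Bu * Bs * d * / d1 ^ (m + 1)) by ring.
  apply Rmult_le_compat_l. apply Rmult_le_pos. apply Rmult_le_pos; lra. lra.
  apply Rinv_le_contravar; auto.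
Qed.

Lemma T4_bound L D s M Bs m : 0 < L -> Rabs D <= M * L ^ m -> Rabs s <= Bs -> 0 <= M ->
  Rabs (D * s / L ^ m) <= M * Bs.
Proof. intros. apply T3_small; auto. Qed.

Definition H1prop (m : nat) (K : R -> Prop) (u : R -> R) :=
  forall e, 0 < e -> exists d, 0 < d /\ forall a b, K a -> K b -> a < b -> b - a < d ->
    Rabs (u b - u a) <= e * (b - a) ^ m.

Lemma z0_sub j a b : z0 j a - z0 j b = z0 j (a - b).
Proof. destruct j; simpl; ring. Qed.

Lemma z0_abs j c : Rabs (z0 j c) <= Rabs c.
Proof. destruct j; simpl. lra. rewrite Rabs_R0. apply Rabs_pos. Qed.

Lemma abs_sub_le a b B : Rabs a <= B -> Rabs b <= B -> Rabs (a - b) <= 2 * B.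
Proof. intros. unfold Rminus. eapply Rle_trans. apply Rabs_triang. rewrite Rabs_Ropp. lra. Qed.

Lemma u_small m K u e1 d0 a b : (1 <= m)%nat -> 0 < e1 ->
  (forall a b, K a -> K b -> a < b -> b - a < d0 -> Rabs (u b - u a) <= e1 * (b - a) ^ m) ->
  K a -> K b -> a <= b -> b - a < d0 -> b - a <= 1 -> Rabs (u b - u a) <= e1 * (b - a).
Proof.
  intros Hm He H Ha Hb Hab Hd Hd1. destruct (Req_dec a b) as [->|Hne].
  - unfold Rminus. rewrite Rplus_opp_r, Rabs_R0. lra.
  - apply Rle_trans with (e1 * (b - a) ^ m). apply H; auto. lra.
    apply Rmult_le_compat_l. lra. apply pow_le_self; auto. lra.
Qed.

Lemma psi_right m K u al be Sf Bs Bu j : (1 <= m)%nat -> WH K al be -> SSprop m Sf Bs ->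
  H1prop m K u -> (forall x, K x -> Rabs (u x) <= Bu) -> (S j <= m)%nat ->
  forall e, 0 < e -> exists d, 0 < d /\ forall x y, K x -> x < y -> y - x < d ->
    Rabs (psi K u al be Sf j y - psi K u al be Sf j x) <= e * (y - x).
Proof.
  intros Hm HW HSS H1u HBu Hj e He.
  pose proof HW as (Hc&Ha&Hb&Hbd).
  destruct HSS as (HS & HBs0 & HS0 & HS1 & HS1' & Hbnd & b1 & b2 & b3 & b4).
  assert (HBu0 : 0 <= Bu) by (pose proof (HBu al Ha); pose proof (Rabs_pos (u al)); lra).
  set (e1 := e / (Bs + 2)).
  assert (He1 : 0 < e1) by (unfold e1; apply Rdiv_lt_0_compat; lra).
  assert (He1e : e1 * (Bs + 2) = e) by (unfold e1; field; lra).
  destruct (H1u e1 He1) as [d0 [Hd0 Hd0']].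
  set (d1 := Rmin 1 d0).
  assert (Hd1 : 0 < d1) by (apply Rmin_pos; lra).
  assert (Hd1a : d1 <= 1) by apply Rmin_l. assert (Hd1b : d1 <= d0) by apply Rmin_r.
  set (C2 := 2 * Bu * Bs / d1 ^ (j + 2)).
  assert (HC2 : 0 <= C2).
  { unfold C2. unfold Rdiv. apply Rmult_le_pos. apply Rmult_le_pos; lra. left; apply Rinv_0_lt_compat, pow_lt; lra. }
  exists (Rmin d1 (e1 / (C2 + 1))). split. apply Rmin_pos; auto. apply Rdiv_lt_0_compat; lra.
  intros x y Hx Hxy Hd.
  pose proof (Rmin_l d1 (e1 / (C2 + 1))). pose proof (Rmin_r d1 (e1 / (C2 + 1))).
  assert (HC2y : C2 * (y - x) <= e1).
  { apply Rle_trans with (C2 * (e1 / (C2 + 1))). apply Rmult_le_compat_l; lra.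
    unfold Rdiv. rewrite <- Rmult_assoc. rewrite (Rmult_comm C2 e1). rewrite Rmult_assoc.
    rewrite <- (Rmult_1_r e1) at 2. apply Rmult_le_compat_l. lra.
    apply Rmult_le_reg_r with (C2 + 1). lra. rewrite Rmult_assoc, Rinv_l by lra. lra. }
  assert (Hbound : forall a b, K a -> K b -> x <= a -> a <= b -> b <= y -> Rabs (u b - u a) <= e1 * (b - a)).
  { intros a b Ha' Hb' H1 H2 H3. apply (u_small m K u e1 d0); auto; lra. }
  rewrite (psi_K K u al be Sf j x Hx).
  destruct (excluded_middle_informative (K y)) as [Hy|Hy].
  - rewrite psi_K; auto. rewrite z0_sub. eapply Rle_trans. apply z0_abs.
    apply Rle_trans with (e1 * (y - x)). apply Hbound; auto; lra.
    apply Rmult_le_compat_r; [lra|]. rewrite <- He1e. nra.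
  - destruct (Rlt_dec be y) as [Hby|Hby].
    + rewrite psi_gt; auto. rewrite z0_sub. eapply Rle_trans. apply z0_abs.
      pose proof (Hbd x Hx).
      apply Rle_trans with (e1 * (be - x)). apply Hbound; auto; lra.
      assert (e1 * (be - x) <= e1 * (y - x)) by (apply Rmult_le_compat_l; lra).
      rewrite <- He1e. assert (0 <= e1 * Bs * (y - x)) by (apply Rmult_le_pos; [apply Rmult_le_pos|]; lra). nra.
    + pose proof (Hbd x Hx).
      destruct (gapL_spec K y Hc) as (_ & _ & HpK). { exists x. split; auto. lra. }
      destruct (gap_spec K al be y Hc Ha Hb Hbd Hy ltac:(lra)) as (Hp&Hq&Hpq&Hgap&Hgap2).
      rewrite psi_gap; auto; [|lra].
      set (p := gapL K y) in *. set (q := gapR K y) in *.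
      specialize (HpK x Hx ltac:(lra)).
      set (L := q - p). set (t := (y - p) / L).
      assert (HLq : L = q - p) by reflexivity.
      assert (HL : 0 < L) by (unfold L; lra).
      assert (Ht : 0 <= t <= 1).
      { unfold t. split. apply Rdiv_le_0_compat; lra. apply Rmult_le_reg_r with L; auto.
        unfold Rdiv. rewrite Rmult_assoc, Rinv_l by lra. unfold L; lra. }
      assert (E : z0 j (u p) + (u q - u p) * Derive_n Sf j t / L ^ j - z0 j (u x) =
                  z0 j (u p - u x) + (u q - u p) * (Derive_n Sf j t - Derive_n Sf j 0) / L ^ j).
      { rewrite (HS0 j ltac:(lia)). rewrite <- z0_sub. field. apply pow_nonzero. lra. }
      rewrite E. eapply Rle_trans. apply Rabs_triang.
      assert (B1 : Rabs (z0 j (u p - u x)) <= e1 * (y - x)).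
      { eapply Rle_trans. apply z0_abs. apply Rle_trans with (e1 * (p - x)). apply Hbound; auto; lra.
        apply Rmult_le_compat_l; lra. }
      assert (B2 : Rabs ((u q - u p) * (Derive_n Sf j t - Derive_n Sf j 0) / L ^ j) <= e1 * (Bs + 1) * (y - x)).
      { destruct (Rlt_dec L d1) as [HLs|HLl].
        - apply Rle_trans with (e1 * Bs * (y - p)).
          + apply (T2_small L (y - p) _ _ e1 Bs j m); try lra.
            * rewrite HLq. apply Hd0'; auto; lra.
            * apply b1; auto. lia.
            * auto.
          + assert (0 <= e1 * Bs) by (apply Rmult_le_pos; lra).
            assert (e1 * Bs * (y - p) <= e1 * Bs * (y - x)) by (apply Rmult_le_compat_l; lra).
            assert (0 <= e1 * (y - x)) by (apply Rmult_le_pos; lra). lra.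
        - apply Rle_trans with (C2 * (y - p) ^ 2).
          apply (T2_large L (y - p) _ _ Bu Bs d1 j); try lra.
          apply abs_sub_le; auto.
          apply b3; auto.
          assert (0 <= y - p <= y - x) by lra.
          assert ((y - p) ^ 2 <= (y - x) * (y - x)) by (simpl; nra).
          apply Rle_trans with (C2 * ((y - x) * (y - x))). apply Rmult_le_compat_l; auto.
          assert (0 <= e1 * Bs) by (apply Rmult_le_pos; lra).
          nra. }
      rewrite <- He1e. nra.
Qed.

Lemma psi_left m K u al be Sf Bs Bu j : (1 <= m)%nat -> WH K al be -> SSprop m Sf Bs ->
  H1prop m K u -> (forall x, K x -> Rabs (u x) <= Bu) -> (S j <= m)%nat ->
  forall e, 0 < e -> exists d, 0 < d /\ forall x y, K x -> y < x -> x - y < d ->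
    Rabs (psi K u al be Sf j y - psi K u al be Sf j x) <= e * (x - y).
Proof.
  intros Hm HW HSS H1u HBu Hj e He.
  pose proof HW as (Hc&Ha&Hb&Hbd).
  destruct HSS as (HS & HBs0 & HS0 & HS1 & HS1' & Hbnd & b1 & b2 & b3 & b4).
  assert (HBu0 : 0 <= Bu) by (pose proof (HBu al Ha); pose proof (Rabs_pos (u al)); lra).
  set (e1 := e / (Bs + 2)).
  assert (He1 : 0 < e1) by (unfold e1; apply Rdiv_lt_0_compat; lra).
  assert (He1e : e1 * (Bs + 2) = e) by (unfold e1; field; lra).
  destruct (H1u e1 He1) as [d0 [Hd0 Hd0']].
  set (d1 := Rmin 1 d0).
  assert (Hd1 : 0 < d1) by (apply Rmin_pos; lra).
  assert (Hd1a : d1 <= 1) by apply Rmin_l. assert (Hd1b : d1 <= d0) by apply Rmin_r.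
  set (C2 := 2 * Bu * Bs / d1 ^ (j + 2)).
  assert (HC2 : 0 <= C2).
  { unfold C2. unfold Rdiv. apply Rmult_le_pos. apply Rmult_le_pos; lra. left; apply Rinv_0_lt_compat, pow_lt; lra. }
  exists (Rmin d1 (e1 / (C2 + 1))). split. apply Rmin_pos; auto. apply Rdiv_lt_0_compat; lra.
  intros x y Hx Hxy Hd.
  pose proof (Rmin_l d1 (e1 / (C2 + 1))). pose proof (Rmin_r d1 (e1 / (C2 + 1))).
  assert (HC2y : C2 * (x - y) <= e1).
  { apply Rle_trans with (C2 * (e1 / (C2 + 1))). apply Rmult_le_compat_l; lra.
    unfold Rdiv. rewrite <- Rmult_assoc. rewrite (Rmult_comm C2 e1). rewrite Rmult_assoc.
    rewrite <- (Rmult_1_r e1) at 2. apply Rmult_le_compat_l. lra.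
    apply Rmult_le_reg_r with (C2 + 1). lra. rewrite Rmult_assoc, Rinv_l by lra. lra. }
  assert (Hbound : forall a b, K a -> K b -> y <= a -> a <= b -> b <= x -> Rabs (u a - u b) <= e1 * (b - a)).
  { intros a b Ha' Hb' H1 H2 H3. rewrite Rabs_minus_sym. apply (u_small m K u e1 d0); auto; lra. }
  rewrite (psi_K K u al be Sf j x Hx).
  destruct (excluded_middle_informative (K y)) as [Hy|Hy].
  - rewrite psi_K; auto. rewrite z0_sub. eapply Rle_trans. apply z0_abs.
    apply Rle_trans with (e1 * (x - y)). apply Hbound; auto; lra.
    apply Rmult_le_compat_r; [lra|]. rewrite <- He1e. nra.
  - destruct (Rlt_dec y al) as [Hby|Hby].
    + rewrite psi_lt; auto. rewrite z0_sub. eapply Rle_trans. apply z0_abs.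
      pose proof (Hbd x Hx).
      apply Rle_trans with (e1 * (x - al)). apply Hbound; auto; lra.
      assert (e1 * (x - al) <= e1 * (x - y)) by (apply Rmult_le_compat_l; lra).
      rewrite <- He1e. assert (0 <= e1 * Bs * (x - y)) by (apply Rmult_le_pos; [apply Rmult_le_pos|]; lra). nra.
    + pose proof (Hbd x Hx).
      destruct (gapR_spec K y Hc) as (_ & _ & HqK). { exists x. split; auto. lra. }
      destruct (gap_spec K al be y Hc Ha Hb Hbd Hy ltac:(lra)) as (Hp&Hq&Hpq&Hgap&Hgap2).
      rewrite psi_gap; auto; [|lra].
      set (p := gapL K y) in *. set (q := gapR K y) in *.
      specialize (HqK x Hx ltac:(lra)).
      set (L := q - p). set (t := (y - p) / L).
      assert (HLq : L = q - p) by reflexivity.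
      assert (HL : 0 < L) by (unfold L; lra).
      assert (Ht : 0 <= t <= 1).
      { unfold t. split. apply Rdiv_le_0_compat; lra. apply Rmult_le_reg_r with L; auto.
        unfold Rdiv. rewrite Rmult_assoc, Rinv_l by lra. unfold L; lra. }
      assert (H1t : 1 - t = (q - y) / L) by (unfold t; rewrite HLq; field; lra).
      assert (E : z0 j (u p) + (u q - u p) * Derive_n Sf j t / L ^ j - z0 j (u x) =
                  z0 j (u q - u x) + (u q - u p) * (Derive_n Sf j t - Derive_n Sf j 1) / L ^ j).
      { destruct j as [|j'].
        - simpl Derive_n. rewrite HS1. simpl. field.
        - rewrite (HS1' (S j') ltac:(lia)). simpl z0. field. apply pow_nonzero. lra. }
      rewrite E. eapply Rle_trans. apply Rabs_triang.
      assert (B1 : Rabs (z0 j (u q - u x)) <= e1 * (x - y)).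
      { eapply Rle_trans. apply z0_abs. apply Rle_trans with (e1 * (x - q)). apply Hbound; auto; lra.
        apply Rmult_le_compat_l; lra. }
      assert (B2 : Rabs ((u q - u p) * (Derive_n Sf j t - Derive_n Sf j 1) / L ^ j) <= e1 * (Bs + 1) * (x - y)).
      { destruct (Rlt_dec L d1) as [HLs|HLl].
        - apply Rle_trans with (e1 * Bs * (q - y)).
          + apply (T2_small L (q - y) _ _ e1 Bs j m); try lra.
            * rewrite HLq. apply Hd0'; auto; lra.
            * rewrite <- H1t. apply b2; auto. lia.
            * auto.
          + assert (e1 * Bs * (q - y) <= e1 * Bs * (x - y)). { apply Rmult_le_compat_l. apply Rmult_le_pos; lra. lra. }
            assert (0 <= e1 * (x - y)) by (apply Rmult_le_pos; lra). lra.
        - apply Rle_trans with (C2 * (q - y) ^ 2).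
          apply (T2_large L (q - y) _ _ Bu Bs d1 j); try lra.
          apply abs_sub_le; auto.
          rewrite <- H1t. apply b4; auto.
          assert (0 <= q - y <= x - y) by lra.
          assert ((q - y) ^ 2 <= (x - y) * (x - y)) by (simpl; nra).
          apply Rle_trans with (C2 * ((x - y) * (x - y))). apply Rmult_le_compat_l; auto.
          assert (0 <= e1 * Bs) by (apply Rmult_le_pos; lra).
          nra. }
      rewrite <- He1e. nra.
Qed.

Lemma z0_S m c : (1 <= m)%nat -> z0 m c = 0.
Proof. intros H. destruct m; [lia|reflexivity]. Qed.

Lemma H2_of_H1 m K u Bu : H1prop m K u -> (forall x, K x -> Rabs (u x) <= Bu) ->
  exists M, 0 <= M /\ forall a b, K a -> K b -> a < b -> Rabs (u b - u a) <= M * (b - a) ^ m.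
Proof.
  intros H1u HBu. destruct (H1u 1 ltac:(lra)) as [d0 [Hd0 Hd0']].
  assert (Hdm : 0 < d0 ^ m) by (apply pow_lt; lra).
  exists (Rmax 1 (2 * Bu / d0 ^ m)). split. apply Rle_trans with 1. lra. apply Rmax_l.
  intros a b Ha Hb Hab.
  assert (Hbm : 0 <= (b - a) ^ m) by (apply pow_le; lra).
  destruct (Rlt_dec (b - a) d0).
  - apply Rle_trans with (1 * (b - a) ^ m). apply Hd0'; auto.
    apply Rmult_le_compat_r; auto. apply Rmax_l.
  - apply Rle_trans with (2 * Bu). apply abs_sub_le; auto.
    assert (HBu0 : 0 <= Bu) by (pose proof (HBu a Ha); pose proof (Rabs_pos (u a)); lra).
    apply Rle_trans with (2 * Bu / d0 ^ m * (b - a) ^ m).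
    + assert (d0 ^ m <= (b - a) ^ m) by (apply pow_incr; lra).
      replace (2 * Bu) with (2 * Bu / d0 ^ m * d0 ^ m) at 1 by (field; lra).
      apply Rmult_le_compat_l; auto. apply Rdiv_le_0_compat; lra.
    + apply Rmult_le_compat_r; auto. apply Rmax_r.
Qed.

Lemma psi_m_right m K u al be Sf Bs Bu : (1 <= m)%nat -> WH K al be -> SSprop m Sf Bs ->
  H1prop m K u -> (forall x, K x -> Rabs (u x) <= Bu) ->
  forall e, 0 < e -> exists d, 0 < d /\ forall x y, K x -> x < y -> y - x < d ->
    Rabs (psi K u al be Sf m y) <= e.
Proof.
  intros Hm HW HSS H1u HBu e He.
  pose proof HW as (Hc&Ha&Hb&Hbd).
  destruct HSS as (HS & HBs0 & HS0 & HS1 & HS1' & Hbnd & b1 & b2 & b3 & b4).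
  assert (HBu0 : 0 <= Bu) by (pose proof (HBu al Ha); pose proof (Rabs_pos (u al)); lra).
  set (e1 := e / (Bs + 1)).
  assert (He1 : 0 < e1) by (unfold e1; apply Rdiv_lt_0_compat; lra).
  assert (He1e : e1 * (Bs + 1) = e) by (unfold e1; field; lra).
  destruct (H1u e1 He1) as [d0 [Hd0 Hd0']].
  set (d1 := Rmin 1 d0).
  assert (Hd1 : 0 < d1) by (apply Rmin_pos; lra).
  assert (Hd1a : d1 <= 1) by apply Rmin_l. assert (Hd1b : d1 <= d0) by apply Rmin_r.
  set (C3 := 2 * Bu * Bs / d1 ^ (m + 1)).
  assert (HC3 : 0 <= C3).
  { unfold C3. unfold Rdiv. apply Rmult_le_pos. apply Rmult_le_pos; lra. left; apply Rinv_0_lt_compat, pow_lt; lra. }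
  exists (Rmin d1 (e1 / (C3 + 1))). split. apply Rmin_pos; auto. apply Rdiv_lt_0_compat; lra.
  intros x y Hx Hxy Hd.
  pose proof (Rmin_l d1 (e1 / (C3 + 1))). pose proof (Rmin_r d1 (e1 / (C3 + 1))).
  assert (HC3y : C3 * (y - x) <= e1).
  { apply Rle_trans with (C3 * (e1 / (C3 + 1))). apply Rmult_le_compat_l; lra.
    unfold Rdiv. rewrite <- Rmult_assoc. rewrite (Rmult_comm C3 e1). rewrite Rmult_assoc.
    rewrite <- (Rmult_1_r e1) at 2. apply Rmult_le_compat_l. lra.
    apply Rmult_le_reg_r with (C3 + 1). lra. rewrite Rmult_assoc, Rinv_l by lra. lra. }
  assert (He1le : e1 <= e) by (rewrite <- He1e; nra).
  destruct (excluded_middle_informative (K y)) as [Hy|Hy].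
  - rewrite psi_K, z0_S, Rabs_R0; auto; lra.
  - destruct (Rlt_dec be y) as [Hby|Hby].
    + rewrite psi_gt, z0_S, Rabs_R0; auto; lra.
    + pose proof (Hbd x Hx).
      destruct (gapL_spec K y Hc) as (_ & _ & HpK). { exists x. split; auto. lra. }
      destruct (gap_spec K al be y Hc Ha Hb Hbd Hy ltac:(lra)) as (Hp&Hq&Hpq&Hgap&Hgap2).
      rewrite psi_gap; auto; [|lra].
      set (p := gapL K y) in *. set (q := gapR K y) in *.
      specialize (HpK x Hx ltac:(lra)).
      set (L := q - p). set (t := (y - p) / L).
      assert (HLq : L = q - p) by reflexivity.
      assert (HL : 0 < L) by (unfold L; lra).
      assert (Ht : 0 <= t <= 1).
      { unfold t. split. apply Rdiv_le_0_compat; lra. apply Rmult_le_reg_r with L; auto.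
        unfold Rdiv. rewrite Rmult_assoc, Rinv_l by lra. unfold L; lra. }
      rewrite z0_S, Rplus_0_l by auto.
      destruct (Rlt_dec L d1) as [HLs|HLl].
      * apply Rle_trans with (e1 * Bs); [|nra].
        apply (T3_small L _ _ e1 Bs m); try lra.
        rewrite HLq. apply Hd0'; auto; lra. apply Hbnd; auto.
      * apply Rle_trans with (C3 * (y - p)).
        apply (T3_large L (y - p) _ _ Bu Bs d1 m); try lra.
        apply abs_sub_le; auto.
        specialize (b1 m t (le_n m) Ht). rewrite (HS0 m (le_n m)), Rminus_0_r in b1. exact b1.
        assert (C3 * (y - p) <= C3 * (y - x)) by (apply Rmult_le_compat_l; lra). lra.
Qed.

Lemma psi_m_left m K u al be Sf Bs Bu : (1 <= m)%nat -> WH K al be -> SSprop m Sf Bs ->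
  H1prop m K u -> (forall x, K x -> Rabs (u x) <= Bu) ->
  forall e, 0 < e -> exists d, 0 < d /\ forall x y, K x -> y < x -> x - y < d ->
    Rabs (psi K u al be Sf m y) <= e.
Proof.
  intros Hm HW HSS H1u HBu e He.
  pose proof HW as (Hc&Ha&Hb&Hbd).
  destruct HSS as (HS & HBs0 & HS0 & HS1 & HS1' & Hbnd & b1 & b2 & b3 & b4).
  assert (HBu0 : 0 <= Bu) by (pose proof (HBu al Ha); pose proof (Rabs_pos (u al)); lra).
  set (e1 := e / (Bs + 1)).
  assert (He1 : 0 < e1) by (unfold e1; apply Rdiv_lt_0_compat; lra).
  assert (He1e : e1 * (Bs + 1) = e) by (unfold e1; field; lra).
  destruct (H1u e1 He1) as [d0 [Hd0 Hd0']].
  set (d1 := Rmin 1 d0).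
  assert (Hd1 : 0 < d1) by (apply Rmin_pos; lra).
  assert (Hd1a : d1 <= 1) by apply Rmin_l. assert (Hd1b : d1 <= d0) by apply Rmin_r.
  set (C3 := 2 * Bu * Bs / d1 ^ (m + 1)).
  assert (HC3 : 0 <= C3).
  { unfold C3. unfold Rdiv. apply Rmult_le_pos. apply Rmult_le_pos; lra. left; apply Rinv_0_lt_compat, pow_lt; lra. }
  exists (Rmin d1 (e1 / (C3 + 1))). split. apply Rmin_pos; auto. apply Rdiv_lt_0_compat; lra.
  intros x y Hx Hxy Hd.
  pose proof (Rmin_l d1 (e1 / (C3 + 1))). pose proof (Rmin_r d1 (e1 / (C3 + 1))).
  assert (HC3y : C3 * (x - y) <= e1).
  { apply Rle_trans with (C3 * (e1 / (C3 + 1))). apply Rmult_le_compat_l; lra.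
    unfold Rdiv. rewrite <- Rmult_assoc. rewrite (Rmult_comm C3 e1). rewrite Rmult_assoc.
    rewrite <- (Rmult_1_r e1) at 2. apply Rmult_le_compat_l. lra.
    apply Rmult_le_reg_r with (C3 + 1). lra. rewrite Rmult_assoc, Rinv_l by lra. lra. }
  assert (He1le : e1 <= e) by (rewrite <- He1e; nra).
  destruct (excluded_middle_informative (K y)) as [Hy|Hy].
  - rewrite psi_K, z0_S, Rabs_R0; auto; lra.
  - destruct (Rlt_dec y al) as [Hby|Hby].
    + rewrite psi_lt, z0_S, Rabs_R0; auto; lra.
    + pose proof (Hbd x Hx).
      destruct (gapR_spec K y Hc) as (_ & _ & HqK). { exists x. split; auto. lra. }
      destruct (gap_spec K al be y Hc Ha Hb Hbd Hy ltac:(lra)) as (Hp&Hq&Hpq&Hgap&Hgap2).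
      rewrite psi_gap; auto; [|lra].
      set (p := gapL K y) in *. set (q := gapR K y) in *.
      specialize (HqK x Hx ltac:(lra)).
      set (L := q - p). set (t := (y - p) / L).
      assert (HLq : L = q - p) by reflexivity.
      assert (HL : 0 < L) by (unfold L; lra).
      assert (Ht : 0 <= t <= 1).
      { unfold t. split. apply Rdiv_le_0_compat; lra. apply Rmult_le_reg_r with L; auto.
        unfold Rdiv. rewrite Rmult_assoc, Rinv_l by lra. unfold L; lra. }
      assert (H1t : 1 - t = (q - y) / L) by (unfold t; rewrite HLq; field; lra).
      rewrite z0_S, Rplus_0_l by auto.
      destruct (Rlt_dec L d1) as [HLs|HLl].
      * apply Rle_trans with (e1 * Bs); [|nra].
        apply (T3_small L _ _ e1 Bs m); try lra.
        rewrite HLq. apply Hd0'; auto; lra. apply Hbnd; auto.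
      * apply Rle_trans with (C3 * (q - y)).
        apply (T3_large L (q - y) _ _ Bu Bs d1 m); try lra.
        apply abs_sub_le; auto.
        specialize (b2 m t (le_n m) Ht). rewrite (HS1' m ltac:(lia)), Rminus_0_r, H1t in b2. exact b2.
        assert (C3 * (q - y) <= C3 * (x - y)) by (apply Rmult_le_compat_l; lra). lra.
Qed.

Lemma psi_m_bound m K u al be Sf Bs Bu : (1 <= m)%nat -> WH K al be -> SSprop m Sf Bs ->
  H1prop m K u -> (forall x, K x -> Rabs (u x) <= Bu) ->
  exists C, forall y, Rabs (psi K u al be Sf m y) <= C.
Proof.
  intros Hm HW HSS H1u HBu.
  pose proof HW as (Hc&Ha&Hb&Hbd).
  destruct (H2_of_H1 m K u Bu H1u HBu) as [M [HM0 HM]].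
  destruct HSS as (HS & HBs0 & HS0 & HS1 & HS1' & Hbnd & b1 & b2 & b3 & b4).
  exists (M * Bs). intros y.
  assert (0 <= M * Bs) by (apply Rmult_le_pos; auto).
  destruct (excluded_middle_informative (K y)) as [Hy|Hy].
  - rewrite psi_K, z0_S, Rabs_R0; auto.
  - destruct (Rlt_dec y al) as [Hya|Hya].
    + rewrite psi_lt, z0_S, Rabs_R0; auto.
    + destruct (Rlt_dec be y) as [Hby|Hby].
      * rewrite psi_gt, z0_S, Rabs_R0; auto.
      * destruct (gap_spec K al be y Hc Ha Hb Hbd Hy ltac:(lra)) as (Hp&Hq&Hpq&Hgap&Hgap2).
        rewrite psi_gap; auto; [|lra].
        rewrite z0_S, Rplus_0_l by auto.
        set (p := gapL K y) in *. set (q := gapR K y) in *.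
        apply T4_bound; auto. lra. apply HM; auto; lra.
        apply Hbnd; auto. split. apply Rdiv_le_0_compat; lra.
        apply Rmult_le_reg_r with (q - p). lra.
        unfold Rdiv. rewrite Rmult_assoc, Rinv_l by lra. lra.
Qed.

Lemma deriv0 f x : (forall e, 0 < e -> exists d, 0 < d /\ forall y, y <> x -> Rabs (y - x) < d -> Rabs (f y - f x) <= e * Rabs (y - x)) ->
  is_derive f x 0.
Proof.
  intros H. apply is_derive_Reals. intros eps Heps.
  destruct (H (eps / 2) ltac:(lra)) as [d [Hd Hd']].
  exists (mkposreal d Hd). intros h Hh Hhd. simpl in Hhd.
  specialize (Hd' (x + h) ltac:(intro E; apply Hh; lra)). replace (x + h - x) with h in Hd' by ring.
  specialize (Hd' Hhd). rewrite Rminus_0_r. unfold Rdiv. rewrite Rabs_mult, Rabs_inv.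
  assert (0 < Rabs h) by (apply Rabs_pos_lt; auto).
  apply Rle_lt_trans with (eps / 2 * Rabs h * / Rabs h). apply Rmult_le_compat_r; auto.
  left; apply Rinv_0_lt_compat; auto. field_simplify; lra.
Qed.

Lemma cont_of_eps f x : (forall e, 0 < e -> exists d, 0 < d /\ forall y, Rabs (y - x) < d -> Rabs (f y - f x) < e) ->
  continuous f x.
Proof.
  intros H. apply continuity_pt_filterlim. unfold continuity_pt, continue_in, limit1_in, limit_in.
  intros eps Heps. destruct (H eps Heps) as [d [Hd Hd']]. exists d. split; auto.
  intros y [_ Hy]. simpl in *. unfold R_dist in *. apply Hd'; auto.
Qed.

Lemma whitney0 m K u al be Bu : (1 <= m)%nat -> WH K al be -> H1prop m K u ->
  (forall x, K x -> Rabs (u x) <= Bu) ->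
  exists phi, Ck m phi /\ (exists C, forall x, Rabs (Derive_n phi m x) <= C) /\
    (forall x, K x -> phi x = u x) /\ (forall x, K x -> Derive phi x = 0) /\
    (forall x, x < al -> phi x = u al) /\ (forall x, be < x -> phi x = u be).
Proof.
  intros Hm HW H1u HBu.
  destruct (smoothstep_exists m Hm) as [Sf [Bs HSS]].
  pose proof HSS as (HS & _).
  set (ps := psi K u al be Sf).
  assert (HdK : forall j x, (S j <= m)%nat -> K x -> is_derive (ps j) x 0).
  { intros j x Hj Hx. apply deriv0. intros e He.
    destruct (psi_right m K u al be Sf Bs Bu j Hm HW HSS H1u HBu Hj e He) as [d1 [Hd1 Hr]].
    destruct (psi_left m K u al be Sf Bs Bu j Hm HW HSS H1u HBu Hj e He) as [d2 [Hd2 Hl]].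
    exists (Rmin d1 d2). split. apply Rmin_pos; auto. intros y Hyx Hy.
    pose proof (Rmin_l d1 d2). pose proof (Rmin_r d1 d2).
    destruct (Rlt_dec x y).
    - rewrite (Rabs_right (y - x)) by lra. apply Hr; auto. rewrite Rabs_right in Hy; lra.
    - rewrite (Rabs_left (y - x)) by lra. replace (- (y - x)) with (x - y) by ring.
      apply Hl; auto. lra. rewrite Rabs_left in Hy; lra. }
  assert (Hd : forall j x, (j < m)%nat -> is_derive (ps j) x (ps (S j) x)).
  { intros j x Hj. destruct (excluded_middle_informative (K x)) as [Hx|Hx].
    - unfold ps at 2. rewrite (psi_K K u al be Sf (S j) x Hx). simpl z0. apply HdK; auto.
    - exact (psi_deriv_out K u al be Sf j x HW HS Hx). }
  assert (HDn : forall j, (j <= m)%nat -> Derive_n (ps O) j = ps j).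
  { induction j as [|j IH]; intros Hj.
    - apply functional_extensionality; intros; reflexivity.
    - apply functional_extensionality; intros x. simpl. rewrite IH by lia.
      apply is_derive_unique. apply Hd. lia. }
  assert (Hcm : forall x, continuous (ps m) x).
  { intros x. destruct (excluded_middle_informative (K x)) as [Hx|Hx].
    - apply cont_of_eps. intros e He.
      destruct (psi_m_right m K u al be Sf Bs Bu Hm HW HSS H1u HBu (e/2) ltac:(lra)) as [d1 [Hd1 Hr]].
      destruct (psi_m_left m K u al be Sf Bs Bu Hm HW HSS H1u HBu (e/2) ltac:(lra)) as [d2 [Hd2 Hl]].
      exists (Rmin d1 d2). split. apply Rmin_pos; auto. intros y Hy.
      pose proof (Rmin_l d1 d2). pose proof (Rmin_r d1 d2).
      unfold ps. rewrite (psi_K K u al be Sf m x Hx), z0_S, Rminus_0_r by auto.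
      destruct (Rtotal_order x y) as [Hxy|[Hxy|Hxy]].
      + apply Rle_lt_trans with (e/2); [|lra]. apply (Hr x y); auto. rewrite Rabs_right in Hy; lra.
      + subst y. rewrite (psi_K K u al be Sf m x Hx), z0_S, Rabs_R0 by auto. lra.
      + apply Rle_lt_trans with (e/2); [|lra]. apply (Hl x y); auto. rewrite Rabs_left in Hy; lra.
    - apply exder_cont. eexists. exact (psi_deriv_out K u al be Sf m x HW HS Hx). }
  exists (ps O). split; [split|].
  - intros j x Hj. destruct j as [|j]. exact I. simpl. rewrite HDn by lia.
    eexists. apply Hd. lia.
  - rewrite HDn by lia. auto.
  - split.
    + destruct (psi_m_bound m K u al be Sf Bs Bu Hm HW HSS H1u HBu) as [C HC].
      exists C. intros x. rewrite HDn by lia. apply HC.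
    + split; [|split].
      * intros x Hx. unfold ps. rewrite psi_K; auto.
      * intros x Hx. change (Derive (ps O) x) with (Derive_n (ps O) 1 x). rewrite HDn by lia.
        unfold ps. rewrite psi_K; auto.
      * split; intros x Hx; unfold ps; [rewrite psi_lt | rewrite psi_gt]; auto.
Qed.

Lemma taylor_S n p a x : taylor (S n) p a x = taylor n p a x + Derive_n p (S n) a / INR (fact (S n)) * (x - a) ^ (S n).
Proof. unfold taylor. rewrite sum_Sn. reflexivity. Qed.

Lemma taylor_0 p a x : taylor 0 p a x = p a.
Proof. unfold taylor. rewrite sum_O. simpl. field. Qed.

Lemma taylor_at p a n : taylor n p a a = p a.
Proof.
  induction n. apply taylor_0. rewrite taylor_S, IHn. replace (a - a) with 0 by ring.
  rewrite pow_i by lia. ring.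
Qed.

Lemma term_deriv_eq c a k x l : c * (INR k * (x - a) ^ pred k) = l ->
  is_derive (fun t => c * (t - a) ^ k) x l.
Proof.
  intros <-. apply is_derive_scal. 
  replace (INR k * (x - a) ^ pred k) with (INR k * 1 * (x - a) ^ pred k) by ring.
  apply (is_derive_pow (fun t => t - a)).
  auto_derive; auto; ring.
Qed.

Lemma is_derive_taylor n p a x : is_derive (taylor (S n) p a) x (taylor n (Derive p) a x).
Proof.
  induction n.
  - apply is_derive_ext with (fun x => p a + Derive_n p 1 a / INR (fact 1) * (x - a)).
    { intros t. rewrite taylor_S, taylor_0. simpl. ring. }
    rewrite taylor_0. auto_derive. auto. simpl. change (Derive (fun x : R => p x) a) with (Derive p a). field.
  - apply is_derive_ext with (fun x => taylor (S n) p a x + Derive_n p (S (S n)) a / INR (fact (S (S n))) * (x - a) ^ (S (S n))).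
    { intros t. rewrite (taylor_S (S n)). reflexivity. }
    replace (taylor (S n) (Derive p) a x) with (taylor n (Derive p) a x + Derive_n (Derive p) (S n) a / INR (fact (S n)) * (x - a) ^ S n) by (rewrite taylor_S; reflexivity).
    apply (is_derive_plus (taylor (S n) p a)). apply IHn.
    apply term_deriv_eq. rewrite Derive_n_Sr.
    rewrite (fact_simpl (S n)). rewrite mult_INR.
    pose proof (INR_fact_neq_0 (S n)).
    pose proof (pos_INR (S n)).
    replace (INR (S (S n))) with (INR (S n) + 1) by (rewrite (S_INR (S n)); ring).
    simpl pred. field. lra.
Qed.

Lemma taylor_ex_derive n p a x : ex_derive (taylor n p a) x.
Proof.
  destruct n. apply ex_derive_ext with (fun _ => p a). intros; rewrite taylor_0; auto.
  apply ex_derive_const.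
  eexists. apply is_derive_taylor.
Qed.

Lemma taylor_cont n p a x : continuous (taylor n p a) x.
Proof. apply exder_cont, taylor_ex_derive. Qed.

Lemma Derive_taylor n p a x : Derive (taylor (S n) p a) x = taylor n (Derive p) a x.
Proof. apply is_derive_unique, is_derive_taylor. Qed.

Lemma taylor_unif n p c d : Ck n p -> forall eta, 0 < eta -> exists del, 0 < del /\
  forall a x, c <= a <= d -> a <= x -> x - a < del -> Rabs (p x - taylor n p a x) <= eta * (x - a) ^ n.
Proof.
  intros [HD Hc] eta Heta.
  destruct (Heine (Derive_n p n) (fun t => c <= t <= d + 1) (compact_P3 c (d + 1))) with (mkposreal eta Heta) as [del Hdel].
  { intros t _. apply continuity_pt_filterlim. apply Hc. }
  exists (Rmin 1 del). split. apply Rmin_pos. lra. apply cond_pos.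
  intros a x Ha Hax Hxa. pose proof (Rmin_l 1 del). pose proof (Rmin_r 1 del).
  destruct n as [|n].
  - rewrite taylor_0. simpl pow. rewrite Rmult_1_r. left.
    apply (Hdel x a); try lra. rewrite Rabs_right; lra.
  - destruct (Req_dec a x) as [<-|Hne].
    + rewrite taylor_at. unfold Rminus. rewrite !Rplus_opp_r, Rabs_R0. rewrite pow_i by lia. lra.
    + destruct (Taylor_Lagrange p n a x) as [z [Hz Heq]]. lra.
      { intros t Ht k Hk. apply HD. auto. }
      rewrite Heq. rewrite taylor_S. unfold taylor. rewrite sum_n_Reals.
      rewrite (sum_eq (fun m : nat => Derive_n p m a / INR (fact m) * (x - a) ^ m)
                      (fun m : nat => (x - a) ^ m / INR (fact m) * Derive_n p m a)) by (intros; simpl; field; apply INR_fact_neq_0).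
      replace (sum_f_R0 (fun m : nat => (x - a) ^ m / INR (fact m) * Derive_n p m a) n +
        (x - a) ^ S n / INR (fact (S n)) * Derive_n p (S n) z -
        (sum_f_R0 (fun m : nat => (x - a) ^ m / INR (fact m) * Derive_n p m a) n +
         Derive_n p (S n) a / INR (fact (S n)) * (x - a) ^ S n))
        with ((x - a) ^ S n / INR (fact (S n)) * (Derive_n p (S n) z - Derive_n p (S n) a)) by (field; apply INR_fact_neq_0).
      assert (Hf : 1 <= INR (fact (S n))). { apply (le_INR 1). pose proof (lt_O_fact (S n)). lia. }
      assert (Hp : 0 <= (x - a) ^ S n) by (apply pow_le; lra).
      rewrite Rabs_mult. unfold Rdiv. rewrite Rabs_mult. rewrite (Rabs_right ((x - a) ^ S n)) by lra.
      rewrite Rabs_inv. rewrite (Rabs_right (INR _)) by lra.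
      assert (Hu : Rabs (Derive_n p (S n) z - Derive_n p (S n) a) < eta).
      { apply (Hdel z a); try lra. rewrite Rabs_right; lra. }
      assert (0 < / INR (fact (S n)) <= 1).
      { split. apply Rinv_0_lt_compat; lra. rewrite <- Rinv_1. apply Rinv_le_contravar; lra. }
      pose proof (Rabs_pos (Derive_n p (S n) z - Derive_n p (S n) a)).
      set (D := Rabs (Derive_n p (S n) z - Derive_n p (S n) a)) in *.
      set (I := / INR (fact (S n))) in *. set (X := (x - a) ^ S n) in *.
      assert (I * D <= eta) by nra.
      assert (X * (I * D) <= X * eta) by (apply Rmult_le_compat_l; auto). nra.
Qed.

Lemma RInt_lin (q F : R -> R) a b : ex_RInt q a b -> ex_RInt F a b ->
  RInt (fun x => 2 * q x - F x) a b = 2 * RInt q a b - RInt F a b.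
Proof.
  intros Hq HF.
  assert (H2 : ex_RInt (fun x => 2 * q x) a b) by (apply (ex_RInt_scal q a b 2 Hq)).
  pose proof (RInt_minus (fun x => 2 * q x) F a b H2 HF) as E1.
  pose proof (RInt_scal q a b 2 Hq) as E2.
  unfold minus, plus, opp, scal in *. simpl in *. unfold mult in *. simpl in *.
  rewrite <- E2. exact E1.
Qed.

Lemma exRInt_c (f : R -> R) a b : (forall x, continuous f x) -> ex_RInt f a b.
Proof. intros H. apply (ex_RInt_continuous (V:=R_CompleteNormedModule)). intros; apply H. Qed.

Lemma pow_mono_S y z n : 0 <= y <= z -> z <= 1 -> y ^ (S n) <= z ^ n.
Proof.
  intros Hy Hz. apply Rle_trans with (y ^ n).
  - simpl. pose proof (pow_le y n ltac:(lra)). pose proof (pow_le1 y n ltac:(lra)). nra.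
  - apply pow_incr; lra.
Qed.

Definition Ffun (f g : R -> R) := fun x => 2 * (Derive f x * g x - f x * Derive g x).

Lemma AV_H1 m f g h K al be : (1 <= m)%nat -> Ck m f -> Ck m g -> Ck m h ->
  (forall k, K k -> al <= k <= be) -> AV_condition m f g h K ->
  H1prop m K (fun x => h x - RInt (Ffun f g) 0 x).
Proof.
  intros Hm Hf Hg Hh Hbd HAV.
  destruct m as [|n]; [lia|].
  pose proof (proj2 (proj1 (Ck_S n f) Hf)) as Hf1.
  pose proof (proj2 (proj1 (Ck_S n g) Hg)) as Hg1.
  pose proof (Ck_cont _ _ Hf) as Cf. pose proof (Ck_cont _ _ Hg) as Cg.
  pose proof (Ck_cont _ _ Hf1) as Cf1. pose proof (Ck_cont _ _ Hg1) as Cg1.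
  assert (CF : forall x, continuous (Ffun f g) x).
  { apply Ck_cont with 0%nat. unfold Ffun. apply Ck_scal. apply Ck_minus; apply Ck_mult;
    first [apply (Ck_le n 0); [lia|exact Hf1] | apply (Ck_le n 0); [lia|exact Hg1]
          | apply (Ck_le (S n) 0); [lia|exact Hf] | apply (Ck_le (S n) 0); [lia|exact Hg]]. }
  destruct (cont_bounded f al be Cf) as [Bf [HBf0 HBf]].
  destruct (cont_bounded g al be Cg) as [Bg [HBg0 HBg]].
  destruct (cont_bounded (Derive f) al be Cf1) as [Bf1 [HBf10 HBf1]].
  destruct (cont_bounded (Derive g) al be Cg1) as [Bg1 [HBg10 HBg1]].
  intros eps Heps.
  set (C1 := 2 * ((Bg + 1) + Bf1 + (Bf + 1) + Bg1)).
  set (CE := C1 + 2 * Bf + 2 * Bg).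
  assert (HCE : 0 <= CE) by (unfold CE, C1; lra).
  set (eta := Rmin 1 (eps / (2 * (CE + 1)))).
  assert (Heta : 0 < eta) by (apply Rmin_pos; [lra| apply Rdiv_lt_0_compat; lra]).
  assert (Heta1 : eta <= 1) by apply Rmin_l.
  assert (HetaCE : eta * CE <= eps / 2).
  { apply Rle_trans with (eps / (2 * (CE + 1)) * CE). apply Rmult_le_compat_r; auto. apply Rmin_r.
    apply Rmult_le_reg_r with (2 * (CE + 1)). lra. replace (eps / (2 * (CE + 1)) * CE * (2 * (CE + 1))) with (eps * CE) by (field; lra). replace (eps / 2 * (2 * (CE + 1))) with (eps * CE + eps) by (field; lra). lra. }
  set (CV := 1 + (Bf1 + 1) + (Bg1 + 1)).
  set (epsA := eps / (2 * CV)).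
  assert (HepsA : 0 < epsA) by (unfold epsA, CV; apply Rdiv_lt_0_compat; lra).
  assert (HepsACV : epsA * CV = eps / 2) by (unfold epsA, CV; field; lra).
  destruct (taylor_unif (S n) f al be Hf eta Heta) as [d1 [Hd1 UTf]].
  destruct (taylor_unif (S n) g al be Hg eta Heta) as [d2 [Hd2 UTg]].
  destruct (taylor_unif n (Derive f) al be Hf1 eta Heta) as [d3 [Hd3 UTf1]].
  destruct (taylor_unif n (Derive g) al be Hg1 eta Heta) as [d4 [Hd4 UTg1]].
  destruct (HAV epsA HepsA) as [d5 [Hd5 HA]].
  exists (Rmin (Rmin 1 (Rmin d1 d2)) (Rmin (Rmin d3 d4) d5)).
  split. repeat apply Rmin_pos; lra.
  intros a b Ha Hb Hab Hba.
  assert (Hd : b - a <= 1 /\ b - a < d1 /\ b - a < d2 /\ b - a < d3 /\ b - a < d4 /\ b - a < d5).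
  { pose proof (Rmin_l (Rmin 1 (Rmin d1 d2)) (Rmin (Rmin d3 d4) d5)).
    pose proof (Rmin_r (Rmin 1 (Rmin d1 d2)) (Rmin (Rmin d3 d4) d5)).
    pose proof (Rmin_l 1 (Rmin d1 d2)). pose proof (Rmin_r 1 (Rmin d1 d2)).
    pose proof (Rmin_l d1 d2). pose proof (Rmin_r d1 d2).
    pose proof (Rmin_l (Rmin d3 d4) d5). pose proof (Rmin_r (Rmin d3 d4) d5).
    pose proof (Rmin_l d3 d4). pose proof (Rmin_r d3 d4). lra. }
  destruct Hd as (Hd0 & Hdd1 & Hdd2 & Hdd3 & Hdd4 & Hdd5).
  pose proof (Hbd a Ha) as Haab. pose proof (Hbd b Hb) as Hbab.
  set (ba := b - a). assert (Hbaeq : ba = b - a) by reflexivity.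
  assert (Hba0 : 0 < ba) by (unfold ba; lra).
  assert (Hban : 0 <= ba ^ n) by (apply pow_le; lra).
  assert (Rf : forall x, a <= x <= b -> Rabs (f x - taylor (S n) f a x) <= eta * ba ^ n).
  { intros x Hx. eapply Rle_trans. apply UTf; lra. apply Rmult_le_compat_l. lra. apply pow_mono_S; unfold ba; lra. }
  assert (Rg : forall x, a <= x <= b -> Rabs (g x - taylor (S n) g a x) <= eta * ba ^ n).
  { intros x Hx. eapply Rle_trans. apply UTg; lra. apply Rmult_le_compat_l. lra. apply pow_mono_S; unfold ba; lra. }
  assert (Rf1 : forall x, a <= x <= b -> Rabs (Derive f x - taylor n (Derive f) a x) <= eta * ba ^ n).
  { intros x Hx. eapply Rle_trans. apply UTf1; lra. apply Rmult_le_compat_l. lra. apply pow_incr; unfold ba; lra. }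
  assert (Rg1 : forall x, a <= x <= b -> Rabs (Derive g x - taylor n (Derive g) a x) <= eta * ba ^ n).
  { intros x Hx. eapply Rle_trans. apply UTg1; lra. apply Rmult_le_compat_l. lra. apply pow_incr; unfold ba; lra. }
  set (Tf := taylor (S n) f a). set (Tg := taylor (S n) g a).
  set (Tf1 := taylor n (Derive f) a). set (Tg1 := taylor n (Derive g) a).
  assert (CTf : forall x, continuous Tf x) by (intros; apply taylor_cont).
  assert (CTg : forall x, continuous Tg x) by (intros; apply taylor_cont).
  assert (CTf1 : forall x, continuous Tf1 x) by (intros; apply taylor_cont).
  assert (CTg1 : forall x, continuous Tg1 x) by (intros; apply taylor_cont).
  set (Q := fun x => Tf1 x * Tg x - Tg1 x * Tf x).
  assert (CQ : forall x, continuous Q x).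
  { intros x. apply Ck_cont with 0%nat. unfold Q. apply Ck_minus; apply Ck_mult; split;
    try (intros j y Hj; replace j with 0%nat by lia; exact I); intros y; simpl; auto. }
  set (W := fun x => Rabs (Tf1 x) + Rabs (Tg1 x)).
  assert (CW : forall x, continuous W x).
  { intros x. unfold W. apply (continuous_plus (fun x => Rabs (Tf1 x)) (fun x => Rabs (Tg1 x)));
    apply continuous_Rabs_comp; auto. }
  assert (EA : Aq (S n) f g h a b = h b - h a - 2 * RInt Q a b + 2 * f a * (g b - Tg b) - 2 * g a * (f b - Tf b)).
  { unfold Aq. f_equal. f_equal. f_equal. f_equal. f_equal. apply functional_extensionality. intros x.
    unfold Q, Tf1, Tg1. rewrite !Derive_taylor. reflexivity. }
  assert (EV : Vq (S n) f g a b = ba ^ (2 * S n) + ba ^ (S n) * RInt W a b).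
  { unfold Vq. f_equal. f_equal. f_equal. apply functional_extensionality. intros x.
    unfold W, Tf1, Tg1. rewrite !Derive_taylor. reflexivity. }
  assert (HWb : forall x, a <= x <= b -> Rabs (W x) <= Bf1 + 1 + (Bg1 + 1)).
  { intros x Hx. unfold W. rewrite Rabs_right by (pose proof (Rabs_pos (Tf1 x)); pose proof (Rabs_pos (Tg1 x)); lra).
    specialize (Rf1 x Hx). specialize (Rg1 x Hx). specialize (HBf1 x ltac:(lra)). specialize (HBg1 x ltac:(lra)).
    assert (eta * ba ^ n <= 1). { assert (0 <= ba <= 1) by (unfold ba in *; lra). pose proof (pow_le1 ba n H). pose proof (pow_le ba n ltac:(lra)). nra. }
    assert (Rabs (Tf1 x) <= Bf1 + 1).
    { replace (Tf1 x) with (Derive f x - (Derive f x - Tf1 x)) by ring.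
      eapply Rle_trans. apply Rabs_triang. rewrite Rabs_Ropp. assert (Rabs (Derive f x - Tf1 x) <= 1) by (eapply Rle_trans; [apply Rf1|]; lra). lra. }
    assert (Rabs (Tg1 x) <= Bg1 + 1).
    { replace (Tg1 x) with (Derive g x - (Derive g x - Tg1 x)) by ring.
      eapply Rle_trans. apply Rabs_triang. rewrite Rabs_Ropp. assert (Rabs (Derive g x - Tg1 x) <= 1) by (eapply Rle_trans; [apply Rg1|]; lra). lra. }
    lra. }
  assert (HRW0 : 0 <= RInt W a b).
  { apply RInt_ge_0. lra. apply exRInt_c; auto. intros x _. unfold W.
    pose proof (Rabs_pos (Tf1 x)); pose proof (Rabs_pos (Tg1 x)); lra. }
  assert (HRW1 : RInt W a b <= ba * (Bf1 + 1 + (Bg1 + 1))).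
  { eapply Rle_trans. apply Rle_abs. apply abs_RInt_le_const. lra. apply exRInt_c; auto. auto. }
  assert (Hbsn : 0 < ba ^ S n) by (apply pow_lt; lra).
  assert (Hbsn1 : ba ^ S n <= 1) by (apply pow_le1; lra).
  assert (HV0 : 0 < Vq (S n) f g a b).
  { rewrite EV. assert (0 < ba ^ (2 * S n)) by (apply pow_lt; lra).
    assert (0 <= ba ^ S n * RInt W a b) by (apply Rmult_le_pos; lra). lra. }
  assert (HV1 : Vq (S n) f g a b <= ba ^ S n * CV).
  { rewrite EV. replace (2 * S n)%nat with (S n + S n)%nat by lia. rewrite pow_add.
    assert (ba ^ S n * ba ^ S n <= ba ^ S n * 1) by (apply Rmult_le_compat_l; lra).
    assert (ba ^ S n * RInt W a b <= ba ^ S n * (ba * (Bf1 + 1 + (Bg1 + 1)))) by (apply Rmult_le_compat_l; lra).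
    assert (ba * (Bf1 + 1 + (Bg1 + 1)) <= 1 * (Bf1 + 1 + (Bg1 + 1))) by (apply Rmult_le_compat_r; lra).
    assert (ba ^ S n * (ba * (Bf1 + 1 + (Bg1 + 1))) <= ba ^ S n * (1 * (Bf1 + 1 + (Bg1 + 1)))) by (apply Rmult_le_compat_l; lra).
    unfold CV. nra. }
  assert (HAbs : Rabs (Aq (S n) f g h a b) <= eps / 2 * ba ^ S n).
  { specialize (HA a b Ha Hb ltac:(lra)).
    replace (Aq (S n) f g h a b) with (Aq (S n) f g h a b / Vq (S n) f g a b * Vq (S n) f g a b) by (field; lra).
    rewrite Rabs_mult. rewrite (Rabs_right (Vq _ _ _ _ _)) by lra.
    apply Rle_trans with (epsA * (ba ^ S n * CV)).
    apply Rmult_le_compat; try lra. apply Rabs_pos.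
    rewrite <- HepsACV. lra. }
  assert (Hpt : forall x, a <= x <= b -> Rabs (2 * Q x - Ffun f g x) <= eta * C1 * ba ^ n).
  { intros x Hx. specialize (Rf x Hx). specialize (Rg x Hx). specialize (Rf1 x Hx). specialize (Rg1 x Hx).
    specialize (HBf x ltac:(lra)). specialize (HBg x ltac:(lra)). specialize (HBf1 x ltac:(lra)). specialize (HBg1 x ltac:(lra)).
    assert (Hen : eta * ba ^ n <= 1). { pose proof (pow_le1 ba n ltac:(lra)). nra. }
    assert (HTf : Rabs (Tf x) <= Bf + 1).
    { replace (Tf x) with (f x - (f x - Tf x)) by ring.
      eapply Rle_trans. apply Rabs_triang. rewrite Rabs_Ropp. assert (Rabs (f x - Tf x) <= 1) by (eapply Rle_trans; [apply Rf|]; lra). lra. }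
    assert (HTg : Rabs (Tg x) <= Bg + 1).
    { replace (Tg x) with (g x - (g x - Tg x)) by ring.
      eapply Rle_trans. apply Rabs_triang. rewrite Rabs_Ropp. assert (Rabs (g x - Tg x) <= 1) by (eapply Rle_trans; [apply Rg|]; lra). lra. }
    replace (2 * Q x - Ffun f g x) with
      (2 * ((- (Derive f x - Tf1 x)) * Tg x + Derive f x * (- (g x - Tg x))
            - ((- (Derive g x - Tg1 x)) * Tf x + Derive g x * (- (f x - Tf x))))) by (unfold Q, Ffun; ring).
    set (e := eta * ba ^ n) in *.
    assert (He0 : 0 <= e) by (unfold e; apply Rmult_le_pos; lra).
    rewrite Rabs_mult, (Rabs_right 2) by lra.
    assert (T1 : Rabs (- (Derive f x - Tf1 x) * Tg x) <= e * (Bg + 1)).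
    { rewrite Rabs_mult, Rabs_Ropp. apply Rmult_le_compat; auto using Rabs_pos. }
    assert (T2 : Rabs (Derive f x * - (g x - Tg x)) <= Bf1 * e).
    { rewrite Rabs_mult, Rabs_Ropp. apply Rmult_le_compat; auto using Rabs_pos. }
    assert (T3 : Rabs (- (Derive g x - Tg1 x) * Tf x) <= e * (Bf + 1)).
    { rewrite Rabs_mult, Rabs_Ropp. apply Rmult_le_compat; auto using Rabs_pos. }
    assert (T4 : Rabs (Derive g x * - (f x - Tf x)) <= Bg1 * e).
    { rewrite Rabs_mult, Rabs_Ropp. apply Rmult_le_compat; auto using Rabs_pos. }
    set (t1 := - (Derive f x - Tf1 x) * Tg x) in *. set (t2 := Derive f x * - (g x - Tg x)) in *.
    set (t3 := - (Derive g x - Tg1 x) * Tf x) in *. set (t4 := Derive g x * - (f x - Tf x)) in *.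
    assert (Rabs (t1 + t2 - (t3 + t4)) <= Rabs t1 + Rabs t2 + (Rabs t3 + Rabs t4)).
    { unfold Rminus. eapply Rle_trans. apply Rabs_triang. rewrite Rabs_Ropp.
      pose proof (Rabs_triang t1 t2). pose proof (Rabs_triang t3 t4). lra. }
    unfold C1. replace (eta * (2 * (Bg + 1 + Bf1 + (Bf + 1) + Bg1)) * ba ^ n) with (2 * (e * (Bg + 1) + Bf1 * e + e * (Bf + 1) + Bg1 * e)) by (unfold e; ring).
    lra. }
  assert (HRI : Rabs (RInt (fun x => 2 * Q x - Ffun f g x) a b) <= eta * C1 * ba ^ S n).
  { eapply Rle_trans. apply abs_RInt_le_const. lra.
    apply exRInt_c. intros x. apply (continuous_minus (fun x => 2 * Q x) (Ffun f g)).
    apply (continuous_scal_r 2 Q). auto. auto. exact Hpt.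
    fold ba. simpl. lra. }
  assert (Hfb : Rabs (f b - Tf b) <= eta * ba ^ S n) by (apply UTf; lra).
  assert (Hgb : Rabs (g b - Tg b) <= eta * ba ^ S n) by (apply UTg; lra).
  assert (HChasles : RInt (Ffun f g) 0 b - RInt (Ffun f g) 0 a = RInt (Ffun f g) a b).
  { rewrite <- (RInt_Chasles (Ffun f g) 0 a b); try (apply exRInt_c; auto). simpl. unfold plus. simpl. ring. }
  rewrite (RInt_lin Q (Ffun f g) a b) in HRI by (apply exRInt_c; auto).
  replace (h b - RInt (Ffun f g) 0 b - (h a - RInt (Ffun f g) 0 a)) with
    (Aq (S n) f g h a b + ((2 * RInt Q a b - RInt (Ffun f g) a b) - 2 * f a * (g b - Tg b) + 2 * g a * (f b - Tf b))).
  2: { rewrite EA. lra. }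
  specialize (HBf a ltac:(lra)). specialize (HBg a ltac:(lra)).
  assert (Rabs (2 * f a * (g b - Tg b)) <= 2 * Bf * (eta * ba ^ S n)).
  { rewrite !Rabs_mult, (Rabs_right 2) by lra. pose proof (Rabs_pos (f a)); pose proof (Rabs_pos (g b - Tg b)).
    apply Rmult_le_compat; try apply Rmult_le_pos; try lra. }
  assert (Rabs (2 * g a * (f b - Tf b)) <= 2 * Bg * (eta * ba ^ S n)).
  { rewrite !Rabs_mult, (Rabs_right 2) by lra. pose proof (Rabs_pos (g a)); pose proof (Rabs_pos (f b - Tf b)).
    apply Rmult_le_compat; try apply Rmult_le_pos; try lra. }
  set (X1 := Aq (S n) f g h a b) in *. set (X2 := 2 * RInt Q a b - RInt (Ffun f g) a b) in *.
  set (X3 := 2 * f a * (g b - Tg b)) in *. set (X4 := 2 * g a * (f b - Tf b)) in *.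
  assert (Rabs (X1 + (X2 - X3 + X4)) <= Rabs X1 + Rabs X2 + Rabs X3 + Rabs X4).
  { unfold Rminus. eapply Rle_trans. apply Rabs_triang. eapply Rle_trans. apply Rplus_le_compat_l. apply Rabs_triang.
    eapply Rle_trans. apply Rplus_le_compat_l. apply Rplus_le_compat_r. apply Rabs_triang. rewrite Rabs_Ropp. lra. }
  assert (eta * CE * ba ^ S n <= eps / 2 * ba ^ S n) by (apply Rmult_le_compat_r; lra).
  unfold CE in *. fold ba. nra.
Qed.

Lemma Cm_Ck m f : Cm m f -> Ck m f.
Proof. intros [H1 [H2 _]]. split; auto. Qed.

Lemma is_derive_RInt0 (F : R -> R) x : (forall y, continuous F y) -> is_derive (fun x => RInt F 0 x) x (F x).
Proof.
  intros Hc. apply (is_derive_RInt F (fun x => RInt F 0 x) 0 x).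
  apply filter_forall. intros y. apply (RInt_correct (V:=R_CompleteNormedModule)).
  apply (ex_RInt_continuous (V:=R_CompleteNormedModule)). intros; apply Hc. apply Hc.
Qed.

Lemma closedK_of K : closed_set K -> closedK K.
Proof.
  intros H x Hx. destruct (H x Hx) as [d Hd]. exists d. split. apply cond_pos.
  intros y Hy. apply (Hd y). exact Hy.
Qed.

Theorem lemma3p5 (m : nat) (f g h : R -> R) (K : R -> Prop) :
  (0 < m)%nat -> Cm m f -> Cm m g -> Cm m h -> compact K ->
  AV_condition m f g h K ->
  exists hh : R -> R, Cm m hh /\
    (forall x, K x -> hh x = h x) /\
    (forall x, K x -> Derive hh x = 2 * (Derive f x * g x - f x * Derive g x)).
Proof.
  intros Hm0 Hf Hg Hh Hcomp HAV.
  assert (Hm : (1 <= m)%nat) by lia.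
  apply Cm_Ck in Hf, Hg, Hh.
  destruct (Classical_Prop.classic (exists x, K x)) as [[x0 Hx0]|Hne].
  2: { exists (fun _ => 0). split; [|split; intros x Hx; exfalso; apply Hne; eauto].
       destruct (Ck_const m 0) as [H1 H2]. split; auto. split; auto.
       exists 0. intros x. destruct m as [|m']; [lia|]. rewrite Derive_n_const, Rabs_R0. lra. }
  destruct (compact_P1 K Hcomp) as [lo [hi Hlh]].
  pose proof (closedK_of K (compact_P2 K Hcomp)) as Hcl.
  destruct (gapR_spec K lo Hcl) as (Hal & _ & Hal2). { exists x0. split; auto. apply Hlh; auto. }
  destruct (gapL_spec K hi Hcl) as (Hbe & _ & Hbe2). { exists x0. split; auto. apply Hlh; auto. }
  set (al := gapR K lo) in *. set (be := gapL K hi) in *.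
  assert (Hbd : forall k, K k -> al <= k <= be).
  { intros k Hk. pose proof (Hlh k Hk). split. apply Hal2; auto; lra. apply Hbe2; auto; lra. }
  assert (HW : WH K al be) by (split; auto).
  destruct m as [|n]; [lia|].
  set (F := Ffun f g).
  assert (HF : Ck n F).
  { unfold F, Ffun. pose proof (proj2 (proj1 (Ck_S n f) Hf)). pose proof (proj2 (proj1 (Ck_S n g) Hg)).
    apply Ck_scal. apply Ck_minus; apply Ck_mult; auto; apply Ck_weak; auto. }
  set (G := fun x => RInt F 0 x).
  assert (HG : Ck (S n) G) by (apply Ck_RInt; auto).
  assert (HGd : forall x, is_derive G x (F x)) by (intros; apply is_derive_RInt0, Ck_cont with n; auto).
  set (u := fun x => h x - G x).
  assert (H1u : H1prop (S n) K u) by (apply (AV_H1 (S n) f g h K al be); auto).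
  assert (Hucont : forall x, continuous u x) by (apply Ck_cont with (S n); unfold u; apply Ck_minus; auto).
  destruct (cont_bounded u al be Hucont) as [Bu [HBu0 HBu]].
  destruct (whitney0 (S n) K u al be Bu Hm HW H1u) as (phi & Hphi & [Cphi HCphi] & Hphi1 & Hphi2 & _ & _).
  { intros x Hx. apply HBu, Hbd, Hx. }
  set (K' := fun x => K x \/ x = al - 1 \/ x = be + 1).
  set (u' := fun x => if Rle_dec al x then (if Rle_dec x be then 1 else 0) else 0).
  assert (HW' : WH K' (al - 1) (be + 1)).
  { split; [|split; [|split]].
    - intros x Hx. assert (HxK : ~ K x) by (intro; apply Hx; left; auto).
      destruct (Hcl x HxK) as [e [He He2]].
      assert (Hx1 : x <> al - 1) by (intro; apply Hx; right; left; auto).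
      assert (Hx2 : x <> be + 1) by (intro; apply Hx; right; right; auto).
      exists (Rmin e (Rmin (Rabs (x - (al - 1))) (Rabs (x - (be + 1))))). split.
      apply Rmin_pos; auto. apply Rmin_pos; apply Rabs_pos_lt; lra.
      intros y Hy [Hy1|[Hy1|Hy1]].
      + apply (He2 y); auto. eapply Rlt_le_trans; [apply Hy|apply Rmin_l].
      + subst y. pose proof (Rmin_r e (Rmin (Rabs (x - (al - 1))) (Rabs (x - (be + 1))))).
        pose proof (Rmin_l (Rabs (x - (al - 1))) (Rabs (x - (be + 1)))).
        rewrite Rabs_minus_sym in Hy. lra.
      + subst y. pose proof (Rmin_r e (Rmin (Rabs (x - (al - 1))) (Rabs (x - (be + 1))))).
        pose proof (Rmin_r (Rabs (x - (al - 1))) (Rabs (x - (be + 1)))).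
        rewrite Rabs_minus_sym in Hy. lra.
    - right; left; auto.
    - right; right; auto.
    - intros k [Hk|[Hk|Hk]]; [apply Hbd in Hk|subst k|subst k]; pose proof (Hbd al Hal); lra. }
  assert (Hu'K : forall x, K x -> u' x = 1).
  { intros x Hx. apply Hbd in Hx. unfold u'. destruct (Rle_dec al x); [|lra]. destruct (Rle_dec x be); lra. }
  assert (H1u' : H1prop (S n) K' u').
  { intros e He. exists 1. split. lra. intros a b Ha Hb Hab Hba.
    assert (Hal0 : al <= be) by (apply Hbd; auto).
    assert (E : u' b = u' a).
    { destruct Ha as [Ha|[Ha|Ha]]; destruct Hb as [Hb|[Hb|Hb]];
        try (rewrite !Hu'K; auto; fail);
        try (apply Hbd in Ha); try (apply Hbd in Hb); subst; lra. }
    rewrite E. unfold Rminus. rewrite Rplus_opp_r, Rabs_R0.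
    apply Rmult_le_pos. lra. apply pow_le. lra. }
  destruct (whitney0 (S n) K' u' (al - 1) (be + 1) 1 Hm HW' H1u') as (chi & Hchi & [Cchi HCchi] & Hchi1 & Hchi2 & Hchi3 & Hchi4).
  { intros x _. unfold u'. destruct (Rle_dec al x); [destruct (Rle_dec x be)|]; rewrite ?Rabs_R1, ?Rabs_R0; lra. }
  assert (Hu'a : u' (al - 1) = 0) by (unfold u'; destruct (Rle_dec al (al - 1)); [lra|auto]).
  assert (Hu'b : u' (be + 1) = 0).
  { unfold u'. destruct (Rle_dec al (be + 1)); [destruct (Rle_dec (be + 1) be); [lra|auto]|auto]. }
  exists (fun x => chi x * G x + phi x).
  assert (Hhh : Ck (S n) (fun x => chi x * G x + phi x)) by (apply Ck_plus; auto; apply Ck_mult; auto).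
  split; [split; [apply Hhh|split; [apply Hhh|]]|split].
  - destruct (cont_bounded (Derive_n (fun x => chi x * G x + phi x) (S n)) (al - 1) (be + 1)) as [C1 [HC10 HC1]].
    { apply Hhh. }
    exists (Rmax C1 Cphi). intros x.
    destruct (Rlt_dec x (al - 1)) as [Hx|Hx]; [|destruct (Rlt_dec (be + 1) x) as [Hx'|Hx']].
    + rewrite (Derive_n_ext_loc _ phi). eapply Rle_trans; [apply HCphi|apply Rmax_r].
      apply (locR x _ (al - 1 - x)). lra. intros y Hy. apply Rabs_def2 in Hy.
      rewrite Hchi3 by lra. rewrite Hu'a. ring.
    + rewrite (Derive_n_ext_loc _ phi). eapply Rle_trans; [apply HCphi|apply Rmax_r].
      apply (locR x _ (x - (be + 1))). lra. intros y Hy. apply Rabs_def2 in Hy.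
      rewrite Hchi4 by lra. rewrite Hu'b. ring.
    + eapply Rle_trans; [apply HC1; lra|apply Rmax_l].
  - intros x Hx. rewrite Hchi1 by (left; auto). rewrite Hu'K, Hphi1 by auto. unfold u. ring.
  - intros x Hx.
    assert (Exc : ex_derive chi x) by (destruct Hchi as [Hd _]; apply (Hd 1%nat x); lia).
    assert (Exp : ex_derive phi x) by (destruct Hphi as [Hd _]; apply (Hd 1%nat x); lia).
    assert (ExG : ex_derive G x) by (eexists; apply HGd).
    rewrite Derive_plus; auto. 2: apply (ex_derive_mult chi G); auto.
    rewrite Derive_mult; auto.
    rewrite Hchi2 by (left; auto). rewrite Hchi1 by (left; auto). rewrite Hu'K by auto.
    rewrite Hphi2 by auto. rewrite (is_derive_unique G x (F x)) by apply HGd.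
    unfold F, Ffun. ring.
Qed.
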